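(* Let $\mathcal{GA}$ (with population size $\lambda$, selection operator $\mathrm{Sel}$, single-offspring crossover $\mathrm{Cross}$ and mutation $\mathrm{Mut}$) be given, and let $(A_1,\dots,A_{m+1})$ be a partition of $\mathcal X$ into levels, with $T:=\min\{t\lambda\mid P_t\cap A_{m+1}\neq\emptyset\}$. Suppose there exist parameters $s_1,\dots,s_m,s_*,p_0,\varepsilon\in(0,1]$, $\delta>0$ and a constant $\gamma_0\in(0,1)$ such that for all $\gamma\in(0,\gamma_0)$: (C1) $p_{mut}(y\in H_{j+1}\mid x\in H_j)\ge s_j\ge s_*$ for all $j\in[m]$; (C2') $p_{mut}(x\mid x)\ge p_0$ for all $x\in\mathcal X$; (C3') $p_{xor}(x\in H_{j+1}\mid u\in H_j, v\in H_{j+1})\ge\varepsilon$ for all $j\in[m-1]$; (C4') $\beta(\gamma,P)\ge\gamma\sqrt{\frac{1+\delta}{p_0\varepsilon\gamma_0}}$ for every $P\in(\mathcal X\setminus A_{m+1})^\lambda$; (C5) $\lambda\ge\frac{2}{a}\ln\!\left(\frac{32 m p_0}{(\delta\gamma_0)^2 c s_*\psi}\right)$, where $a:=\frac{\delta^2\gamma_0}{2(1+\delta)}$, $\psi:=\min\{\delta/2,1/2\}$ and $c:=\psi^4/24$. Then $$\mathbb E[T]\le\frac{2}{c\psi}\left(m\lambda\bigl(1+\ln(1+c\lambda)\bigr)+\frac{p_0}{(1+\delta)\gamma_0}\sum_{j=1}^m\frac{1}{s_j}\right).$$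
   Context: Let $\mathcal X=\{0,1\}^n$. The non-elitist genetic algorithm $\mathcal{GA}$ with population size $\lambda$ maintains populations $P_t=(x^{1,t},\dots,x^{\lambda,t})\in\mathcal X^\lambda$, $t=0,1,2,\dots$; $P_0$ is produced by some random initialization procedure, and for $t\ge1$, for each $j=1,\dots,\lambda$ (independently), two indices $i,i'\in[\lambda]$ are drawn independently by the selection operator $\mathrm{Sel}(P_{t-1})$ (a random index whose distribution depends on $P_{t-1}$), then $x:=\mathrm{Cross}(x^{i,t-1},x^{i',t-1})$ where $\mathrm{Cross}:\mathcal X\times\mathcal X\to\mathcal X$ is a randomized crossover operator, and $x^{j,t}:=\mathrm{Mut}(x)$ where $\mathrm{Mut}:\mathcal X\to\mathcal X$ is a randomized mutation operator. The algorithm never terminates. Notation: $p_{mut}(y\mid x):=\Pr(\mathrm{Mut}(x)=y)$; $p_{mut}(y\in B\mid x\in A)\ge s$ means $\Pr(\mathrm{Mut}(x)\in B)\ge s$ for every $x\in A$; $p_{xor}(x\in C\mid u\in A,v\in B)\ge\varepsilon$ means $\Pr(\mathrm{Cross}(u,v)\in C)\ge\varepsilon$ for all $u\in A$, $v\in B$. For a partition $(A_1,\dots,A_{m+1})$ of $\mathcal X$ (''levels''), $H_j:=\bigcup_{i=j}^{m+1}A_i$. Fix a total order $\succeq$ on $\mathcal X$ with $x\succ y$ whenever $x\in A_j$, $y\in A_{j-1}$; the elements of a population $P\in\mathcal X^\lambda$ are indexed so that $x^1\succeq x^2\succeq\dots\succeq x^\lambda$. For $\gamma\in(0,1)$ let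 $j(\gamma)$ be such that $x^{\lceil\gamma\lambda\rceil}\in A_{j(\gamma)}$, and let $\beta(\gamma,P)$ be the probability that $\mathrm{Sel}(P)$ returns an index $i$ with $x^i\in H_{j(\gamma)}$. *)

(* Defs.v *)
From Stdlib Require Import Reals.
From mathcomp Require Import all_boot.
Set Implicit Arguments. Unset Strict Implicit. Unset Printing Implicit Defensive.
Local Open Scope R_scope.

Definition bits (n : nat) := (n.-tuple bool).
Definition pop (n lam : nat) := {ffun 'I_lam -> bits n}.


Section GA.
Variables (n lam : nat).
(* randomized operators, given by their probability mass functions *)
Variable Sel : pop n lam -> 'I_lam -> R.             (* Pr(Sel(P) = i) *)
Variable Cross : bits n -> bits n -> bits n -> R.    (* Pr(Cross(u,v) = x) *)
Variable Mut : bits n -> bits n -> R.                (* p_mut(y | x) = Mut x y *)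
Variable init : pop n lam -> R.                      (* Pr(P_0 = P) *)
(* levels: lev x = j  <->  x \in A_j  (j in 1..m+1) *)
Variable lev : bits n -> nat.
Variable m : nat.

Definition is_distr (T : finType) (f : T -> R) : Prop :=
  (forall x, (0 <= f x)) /\ (\big[Rplus/0]_(x : T) f x = 1).

Definition offspring (P : pop n lam) (y : bits n) : R :=
  \big[Rplus/0]_(i : 'I_lam) \big[Rplus/0]_(i' : 'I_lam)
    (Sel P i * Sel P i' * \big[Rplus/0]_(x : bits n) (Cross (P i) (P i') x * Mut x y)).

(* transition kernel Pr(P_{t+1} = Q | P_t = P): lam independent offspring *)
Definition kernel (P Q : pop n lam) : R :=
  \big[Rmult/1]_(j : 'I_lam) offspring P (Q j).

Definition avoids (P : pop n lam) : bool := [forall i, (lev (P i) <= m)%N].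

(* q t Q = Pr(P_0, ..., P_t all avoid A_{m+1} and P_t = Q) *)
Fixpoint q (t : nat) (Q : pop n lam) : R :=
  match t with
  | O => if avoids Q then init Q else 0
  | t'.+1 => if avoids Q then \big[Rplus/0]_(P : pop n lam) (q t' P * kernel P Q)
             else 0
  end.

(* Pr(tau > t), where T = tau * lam, tau the first generation meeting A_{m+1} *)
Definition surv (t : nat) : R := \big[Rplus/0]_(Q : pop n lam) q t Q.

(* partial sums of E[T] = sum_{k>=0} Pr(T > k) = lam * sum_{t>=0} Pr(tau > t) *)
Definition ET_partial (N : nat) : R :=
  (INR lam * \big[Rplus/0]_(O <= t < N) surv t).

(* level of the k-th best individual x^k (1-based) of P, w.r.t. any total
   order compatible with the levels: the k-th largest level in P *)
Definition rank_level (P : pop n lam) (k : nat) : nat :=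
  nth O (sort geq [seq lev (P i) | i : 'I_lam]) k.-1.

(* beta(gamma, P) where k = ceil(gamma * lam) *)
Definition beta_k (k : nat) (P : pop n lam) : R :=
  \big[Rplus/0]_(i : 'I_lam | (rank_level P k <= lev (P i))%N) Sel P i.

End GA.

(* Main.v *)
Require Import Defs.
From HB Require Import structures.
From Stdlib Require Import Reals Lra.
From Coquelicot Require Import Coquelicot.
From mathcomp Require Import all_boot.
From mathcomp Require Import zify.
Set Warnings "-notation-overridden -ambiguous-paths -redundant-canonical-projection".
Set Implicit Arguments. Unset Strict Implicit.
Local Open Scope R_scope.

Lemma RplusA : associative Rplus. Proof. by move=> *; rewrite Rplus_assoc. Qed.
Lemma RmultA : associative Rmult. Proof. by move=> *; rewrite Rmult_assoc. Qed.
HB.instance Definition _ := Monoid.isComLaw.Build R 0 Rplus RplusA Rplus_comm Rplus_0_l.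
HB.instance Definition _ := Monoid.isComLaw.Build R 1 Rmult RmultA Rmult_comm Rmult_1_l.
HB.instance Definition _ := Monoid.isMulLaw.Build R 0 Rmult Rmult_0_l Rmult_0_r.
HB.instance Definition _ := Monoid.isAddLaw.Build R Rmult Rplus Rmult_plus_distr_r Rmult_plus_distr_l.

Lemma leR_trans (x y z : R) : x <= y -> y <= z -> x <= z.
Proof. exact: Rle_trans. Qed.

Section BigR.
Variable I : Type.

Lemma sumR_ge0 (r : seq I) (P : pred I) (F : I -> R) :
  (forall i, P i -> 0 <= F i) -> 0 <= \big[Rplus/0]_(i <- r | P i) F i.
Proof.
move=> H; apply: (big_ind (fun x => 0 <= x)) => //; [lra| move=> x y; lra].
Qed.

Lemma sumR_le (r : seq I) (P : pred I) (F G : I -> R) :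
  (forall i, P i -> F i <= G i) ->
  \big[Rplus/0]_(i <- r | P i) F i <= \big[Rplus/0]_(i <- r | P i) G i.
Proof.
move=> H; apply: (big_ind2 (fun x y => x <= y)) => //; [lra| move=> *; lra].
Qed.

Lemma prodR_ge0 (r : seq I) (P : pred I) (F : I -> R) :
  (forall i, P i -> 0 <= F i) -> 0 <= \big[Rmult/1]_(i <- r | P i) F i.
Proof.
move=> H; apply: (big_ind (fun x => 0 <= x)) => //; [lra| move=> x y; nra].
Qed.

Lemma sumR_sub (r : seq I) (A B : pred I) (F : I -> R) :
  (forall i, A i -> B i) -> (forall i, B i -> 0 <= F i) ->
  \big[Rplus/0]_(i <- r | A i) F i <= \big[Rplus/0]_(i <- r | B i) F i.
Proof.
move=> hAB hF; rewrite (big_mkcond A) (big_mkcond B).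
apply: sumR_le => i _.
case hA: (A i); first by rewrite (hAB _ hA); lra.
case hB: (B i); [exact: hF|lra].
Qed.

Lemma sumR_scal (r : seq I) (P : pred I) (F : I -> R) (c : R) :
  \big[Rplus/0]_(i <- r | P i) (c * F i) = c * \big[Rplus/0]_(i <- r | P i) F i.
Proof. by rewrite big_distrr. Qed.

Lemma sumR_plus (r : seq I) (P : pred I) (F G : I -> R) :
  \big[Rplus/0]_(i <- r | P i) (F i + G i) =
  \big[Rplus/0]_(i <- r | P i) F i + \big[Rplus/0]_(i <- r | P i) G i.
Proof. by rewrite big_split. Qed.
Lemma sumR_minus (r : seq I) (P : pred I) (F G : I -> R) :
  \big[Rplus/0]_(i <- r | P i) (F i - G i) =
  \big[Rplus/0]_(i <- r | P i) F i - \big[Rplus/0]_(i <- r | P i) G i.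
Proof.
rewrite (eq_bigr (fun i => F i + (-1) * G i)); last by move=> *; ring.
by rewrite big_split /= sumR_scal; ring.
Qed.
End BigR.

Lemma iter_plus k c : iter k (Rplus c) 0 = INR k * c.
Proof. elim: k => [|k IH]; first by rewrite /=; lra. rewrite S_INR /= IH; lra. Qed.

Lemma iter_mult k c : iter k (Rmult c) 1 = c ^ k.
Proof. by elim: k => [|k IH] //=; rewrite IH. Qed.

Lemma sumR_const (I : finType) (P : pred I) c :
  \big[Rplus/0]_(i | P i) c = INR #|P| * c.
Proof. by rewrite big_const iter_plus. Qed.

Lemma prodR_const (I : finType) (P : pred I) c :
  \big[Rmult/1]_(i | P i) c = c ^ #|P|.
Proof. by rewrite big_const iter_mult. Qed.

Lemma prod_if (I : finType) (b : pred I) (a : R) :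
  \big[Rmult/1]_(i : I) (if b i then a else 1) = a ^ #|b|.
Proof. by rewrite -big_mkcond prodR_const. Qed.

Lemma exp_INR_mul (k : nat) (x : R) : exp (x * INR k) = exp x ^ k.
Proof.
elim: k => [|k IH]; first by rewrite /= Rmult_0_r exp_0.
by rewrite S_INR Rmult_plus_distr_l Rmult_1_r exp_plus IH /=; ring.
Qed.

Section GA.
Variables (n lam m : nat).
Variable Sel : pop n lam -> 'I_lam -> R.
Variable Cross : bits n -> bits n -> bits n -> R.
Variable Mut : bits n -> bits n -> R.
Hypothesis HSel : forall P, is_distr (Sel P).
Hypothesis HCross : forall u v, is_distr (Cross u v).
Hypothesis HMut : forall x, is_distr (Mut x).

Local Notation off := (offspring Sel Cross Mut).
Local Notation ker := (kernel Sel Cross Mut).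

Lemma Sel_ge0 P i : 0 <= Sel P i. Proof. by case: (HSel P). Qed.
Lemma Cross_ge0 u v x : 0 <= Cross u v x. Proof. by case: (HCross u v). Qed.
Lemma Mut_ge0 x y : 0 <= Mut x y. Proof. by case: (HMut x). Qed.

Lemma off_ge0 P y : 0 <= off P y.
Proof.
rewrite /offspring; apply: sumR_ge0 => i _; apply: sumR_ge0 => i' _.
apply: Rmult_le_pos; first by apply: Rmult_le_pos; apply: Sel_ge0.
apply: sumR_ge0 => x _; apply: Rmult_le_pos; [apply: Cross_ge0|apply: Mut_ge0].
Qed.

Lemma ker_ge0 P Q : 0 <= ker P Q.
Proof. by apply: prodR_ge0 => j _; apply: off_ge0. Qed.

Lemma off_sumB P (B : pred (bits n)) :
  \big[Rplus/0]_(y | B y) off P y =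
  \big[Rplus/0]_(i : 'I_lam) \big[Rplus/0]_(i' : 'I_lam)
    (Sel P i * Sel P i' * \big[Rplus/0]_(x : bits n)
        (Cross (P i) (P i') x * \big[Rplus/0]_(y | B y) Mut x y)).
Proof.
rewrite /offspring exchange_big; apply: eq_bigr => i _.
rewrite exchange_big; apply: eq_bigr => i' _.
rewrite -big_distrr; congr Rmult.
rewrite exchange_big; apply: eq_bigr => x _.
by rewrite big_distrr.
Qed.

Lemma off_sum1 P : \big[Rplus/0]_(y : bits n) off P y = 1.
Proof.
have -> : \big[Rplus/0]_(y : bits n) off P y = \big[Rplus/0]_(y | predT y) off P y by [].
rewrite off_sumB.
have -> : \big[Rplus/0]_(i : 'I_lam) \big[Rplus/0]_(i' : 'I_lam)
    (Sel P i * Sel P i' * \big[Rplus/0]_(x : bits n)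
        (Cross (P i) (P i') x * \big[Rplus/0]_(y | predT y) Mut x y)) =
  \big[Rplus/0]_(i : 'I_lam) \big[Rplus/0]_(i' : 'I_lam) (Sel P i * Sel P i').
  apply: eq_bigr => i _; apply: eq_bigr => i' _.
  have -> : \big[Rplus/0]_(x : bits n) (Cross (P i) (P i') x *
       \big[Rplus/0]_(y | predT y) Mut x y) = \big[Rplus/0]_(x : bits n) Cross (P i) (P i') x.
    by apply: eq_bigr => x _; case: (HMut x) => _ ->; rewrite Rmult_1_r.
  by case: (HCross (P i) (P i')) => _ ->; rewrite Rmult_1_r.
have -> : \big[Rplus/0]_(i : 'I_lam) \big[Rplus/0]_(i' : 'I_lam) (Sel P i * Sel P i')
   = \big[Rplus/0]_(i : 'I_lam) Sel P i.
  by apply: eq_bigr => i _; rewrite -big_distrr /=; case: (HSel P) => _ ->; rewrite Rmult_1_r.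
by case: (HSel P).
Qed.

Lemma off_sumB_le1 P (B : pred (bits n)) : \big[Rplus/0]_(y | B y) off P y <= 1.
Proof.
rewrite -(off_sum1 P); apply: sumR_sub => // y _; exact: off_ge0.
Qed.

Lemma ker_prod P (f : bits n -> R) :
  \big[Rplus/0]_(Q : pop n lam) (ker P Q * \big[Rmult/1]_(i : 'I_lam) f (Q i)) =
  (\big[Rplus/0]_(y : bits n) (off P y * f y)) ^ lam.
Proof.
transitivity (\big[Rmult/1]_(i : 'I_lam) \big[Rplus/0]_(y : bits n) (off P y * f y));
  last by rewrite prodR_const card_ord.
rewrite bigA_distr_bigA.
apply: eq_bigr => Q _; rewrite /kernel -big_split /=.
by [].
Qed.

Lemma ker_sum1 P : \big[Rplus/0]_(Q : pop n lam) ker P Q = 1.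
Proof.
have := ker_prod P (fun _ => 1).
have -> : \big[Rplus/0]_(y : bits n) (off P y * 1) = 1.
  rewrite (eq_bigr (fun y => off P y)); [exact: off_sum1| move=> y _; lra].
rewrite pow1 => <-; apply: eq_bigr => Q _.
by rewrite prodR_const pow1 Rmult_1_r.
Qed.

End GA.

Section GA2.
Variables (n lam m : nat).
Variable Sel : pop n lam -> 'I_lam -> R.
Variable Cross : bits n -> bits n -> bits n -> R.
Variable Mut : bits n -> bits n -> R.
Hypothesis HSel : forall P, is_distr (Sel P).
Hypothesis HCross : forall u v, is_distr (Cross u v).
Hypothesis HMut : forall x, is_distr (Mut x).
Local Notation off := (offspring Sel Cross Mut).
Local Notation ker := (kernel Sel Cross Mut).

Lemma off_lb (P : pop n lam) (S S' : pred 'I_lam) (T B : pred (bits n)) (e mu : R) :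
  (forall i i', S i -> S' i' -> e <= \big[Rplus/0]_(x | T x) Cross (P i) (P i') x) ->
  (forall x, T x -> mu <= \big[Rplus/0]_(y | B y) Mut x y) -> 0 <= e -> 0 <= mu ->
  (\big[Rplus/0]_(i | S i) Sel P i) * (\big[Rplus/0]_(i | S' i) Sel P i) * e * mu
    <= \big[Rplus/0]_(y | B y) off P y.
Proof.
move=> hC hM he hmu; rewrite off_sumB.
have hSel := Sel_ge0 HSel; have hCr := Cross_ge0 HCross; have hMu := Mut_ge0 HMut.
rewrite (Rmult_assoc _ e mu) Rmult_assoc big_distrl /=.
apply: leR_trans _ (sumR_sub (B := xpredT) _ (fun i _ => isT) _); last first.
  move=> i _; apply: sumR_ge0 => i' _; apply: Rmult_le_pos; first by apply: Rmult_le_pos.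
  apply: sumR_ge0 => x _; apply: Rmult_le_pos => //; apply: sumR_ge0 => y _ //.
apply: sumR_le => i Si.
rewrite big_distrl /= big_distrr /=.
apply: leR_trans _ (sumR_sub (B := xpredT) _ (fun i _ => isT) _); last first.
  move=> i' _; apply: Rmult_le_pos; first by apply: Rmult_le_pos.
  apply: sumR_ge0 => x _; apply: Rmult_le_pos => //; apply: sumR_ge0 => y _ //.
apply: sumR_le => i' Si'.
have key : e * mu <= \big[Rplus/0]_(x : bits n) (Cross (P i) (P i') x *
                       \big[Rplus/0]_(y | B y) Mut x y).
  apply: leR_trans _ (sumR_sub (B := xpredT) _ (fun x (_ : T x) => isT) _); last first.
    by move=> x _; apply: Rmult_le_pos => //; apply: sumR_ge0.
  apply: leR_trans (_ : \big[Rplus/0]_(x | T x) (Cross (P i) (P i') x * mu) <= _).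
    rewrite -big_distrl /=; apply: Rmult_le_compat_r => //.
    exact: hC.
  by apply: sumR_le => x Tx; apply: Rmult_le_compat_l => //; apply: hM.
have := Rmult_le_compat_l (Sel P i * Sel P i') _ _ (Rmult_le_pos _ _ (hSel P i) (hSel P i')) key.
by rewrite !Rmult_assoc.
Qed.

End GA2.

Lemma sorted_geq_nth (s : seq nat) (j k : nat) :
  sorted geq s -> (1 <= k)%N -> (k <= count (fun x => j <= x)%N s)%N ->
  (j <= nth O s k.-1)%N.
Proof.
elim: s k => [|x s IH] k /=; first by case: k.
move=> hs hk; have hs' := path_sorted hs.
have hall := order_path_min (fun a b c h1 h2 => leq_trans h2 h1) hs.
case: k hk => [//|[|k]] _ /=.
- case hx: (j <= x)%N => //= hc.
  have: has (fun y => j <= y)%N s by rewrite has_count.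
  case/hasP => y ys hy.
  by move/allP: hall => /(_ y ys) /= hyx; rewrite -hx (leq_trans hy hyx).
- move=> hc; apply: (IH k.+1) => //.
  by move: hc; case: (j <= x)%N => /=; rewrite ?add1n ?add0n // => /ltnW.
Qed.

Section Levels.
Variables (n lam m : nat).
Variable lev : bits n -> nat.
Hypothesis Hlam : (0 < lam)%N.
Hypothesis Hlev : forall x, (1 <= lev x <= m.+1)%N.
Variable k0 : nat.
Hypothesis Hk0a : (1 <= k0)%N.
Hypothesis Hk0b : (k0 <= lam)%N.

Definition cnt (j : nat) (Q : pop n lam) : nat := #|[pred i | (j <= lev (Q i))%N]|.
Definition lvl (Q : pop n lam) : nat := \max_(j < m.+1 | (k0 <= cnt j Q)%N) j.
Definition Yc (Q : pop n lam) : nat := cnt (lvl Q).+1 Q.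

Lemma cnt_mono j j' (Q : pop n lam) : (j <= j')%N -> (cnt j' Q <= cnt j Q)%N.
Proof.
move=> hj; apply: subset_leq_card; apply/subsetP => i; rewrite !inE => h.
exact: leq_trans hj h.
Qed.

Lemma cnt_le_lam j (Q : pop n lam) : (cnt j Q <= lam)%N.
Proof. by rewrite -[X in (_ <= X)%N]card_ord; apply: max_card. Qed.

Lemma cnt1 (Q : pop n lam) : cnt 1 Q = lam.
Proof.
rewrite /cnt -[RHS]card_ord; apply: eq_card => i; rewrite !inE.
by case/andP: (Hlev (Q i)) => ->.
Qed.

Lemma cnt0 (Q : pop n lam) : cnt 0 Q = lam.
Proof. by apply/eqP; rewrite eqn_leq cnt_le_lam -{1}(cnt1 Q) cnt_mono. Qed.

Lemma cnt_avoid (Q : pop n lam) : avoids lev m Q -> cnt m.+1 Q = 0%N.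
Proof.
move/forallP => h; apply: eq_card0 => i; rewrite !inE.
by rewrite ltnNge h.
Qed.

Lemma avoid_m (Q : pop n lam) : avoids lev m Q -> (1 <= m)%N.
Proof.
move/forallP => h; have i : 'I_lam by exists 0%N.
by case/andP: (Hlev (Q i)) => h1 _; apply: leq_trans h1 (h i).
Qed.

Lemma lvl_cond (Q : pop n lam) : (k0 <= cnt (lvl Q) Q)%N.
Proof.
rewrite /lvl (bigmax_eq_arg ord0) /=; last by rewrite cnt0.
by case: arg_maxnP => //=; rewrite cnt0.
Qed.

Lemma lvl_le (Q : pop n lam) : (lvl Q <= m)%N.
Proof. by apply/bigmax_leqP => j _; rewrite -ltnS. Qed.

Lemma lvl_sup (Q : pop n lam) j : (j <= m)%N -> (k0 <= cnt j Q)%N -> (j <= lvl Q)%N.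
Proof.
move=> hj hc; have hj' : (j < m.+1)%N by [].
by apply: (bigmax_sup (Ordinal hj')).
Qed.

Lemma lvl_ge1 (Q : pop n lam) : (1 <= m)%N -> (1 <= lvl Q)%N.
Proof. by move=> hm; apply: lvl_sup => //; rewrite cnt1. Qed.

Lemma Yc_lt (Q : pop n lam) : avoids lev m Q -> (Yc Q < k0)%N.
Proof.
move=> hQ; rewrite /Yc; case: (ltnP (lvl Q) m) => hl.
- rewrite ltnNge; apply/negP => h.
  by have := lvl_sup hl h; rewrite ltnn.
- have -> : lvl Q = m by apply/eqP; rewrite eqn_leq lvl_le hl.
  by rewrite cnt_avoid.
Qed.

Lemma rank_ge (Q : pop n lam) (j k : nat) :
  (1 <= k)%N -> (k <= cnt j Q)%N -> (j <= rank_level lev Q k)%N.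
Proof.
move=> hk hc; rewrite /rank_level; apply: sorted_geq_nth => //.
- apply: sort_sorted => a b; exact: leq_total.
- rewrite count_sort count_map; move: hc; rewrite /cnt cardE.
  rewrite /enum_mem size_filter [X in _ -> (_ <= count _ X)%N](_ : _ = Finite.enum _) //.
  exact: filter_predT.
Qed.

End Levels.

Lemma ln_bound (d : R) : 0 <= d -> ln (1 + d) <= d - d^2 / (2 * (1 + d)).
Proof.
move=> hd.
destruct (Req_dec d 0) as [->|hd0].
{ replace (1+0) with 1 by lra. rewrite ln_1. simpl. field_simplify; lra. }
set f := fun x => x - x^2 / (2 * (1 + x)) - ln (1 + x).
assert (H : forall x, 0 <= x -> x <= d -> derivable_pt_lim f x (x^2 / (2 * (1+x)^2))).
{ move=> x hx _. apply is_derive_Reals. rewrite /f. auto_derive. lra.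
  field. lra. }
destruct (MVT_cor3 f _ 0 d ltac:(lra) (fun x h1 h2 => H x h1 h2)) as [c [h1 [h2 h3]]].
assert (f 0 = 0). { rewrite /f. replace (1+0) with 1 by lra. rewrite ln_1. field. }
assert (0 <= c^2 / (2*(1+c)^2)).
{ apply Rmult_le_pos. nra. apply Rlt_le, Rinv_0_lt_compat. nra. }
assert (0 <= f d) by nra.
rewrite /f in H2. lra.
Qed.

Lemma exp_ge_1x (x : R) : 1 + x <= exp x.
Proof. exact: exp_ineq1_le. Qed.

Lemma pow_le_exp (x : R) (k : nat) : x <= 1 -> (1 - x) ^ k <= exp (- x * INR k).
Proof.
move=> hx; rewrite exp_INR_mul; apply: pow_incr; split; first lra.
have := exp_ge_1x (- x); lra.
Qed.

Lemma bernoulli (x : R) (k : nat) : 0 <= x -> 1 + INR k * x <= (1 + x) ^ k.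
Proof.
move=> hx; elim: k => [|k IH]; first by rewrite /=; lra.
rewrite S_INR /=.
have h0 : 0 <= INR k * x by apply: Rmult_le_pos => //; apply: pos_INR.
nra.
Qed.

Lemma pow_ge0 (x : R) (k : nat) : 0 <= x -> 0 <= x ^ k.
Proof. by move=> hx; apply: pow_le. Qed.

Lemma one_minus_pow (x : R) (k : nat) : 0 <= x <= 1 ->
  (1 - x) ^ k <= / (1 + INR k * x).
Proof.
move=> [h0 h1].
have hb := bernoulli k h0.
have hk : 0 <= INR k * x by apply: Rmult_le_pos => //; apply: pos_INR.
have hp : 0 <= (1 - x) ^ k by apply: pow_ge0; lra.
have hq : (1 - x) ^ k * (1 + x) ^ k <= 1.
  rewrite -Rpow_mult_distr; apply: (Rle_trans _ (1 ^ k)); last by rewrite pow1; lra.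
  apply: pow_incr; split; nra.
apply: (Rmult_le_reg_r (1 + INR k * x)); first lra.
rewrite Rinv_l; last lra.
have : (1 - x) ^ k * (1 + INR k * x) <= (1 - x) ^ k * (1 + x) ^ k
  by apply: Rmult_le_compat_l.
lra.
Qed.

Lemma exp_neg_le (k : R) : 0 <= k -> exp (- k) <= / (1 + k).
Proof.
move=> hk; have h := exp_ge_1x k.
rewrite exp_Ropp; apply: Rinv_le_contravar => //; lra.
Qed.

Lemma one_minus_exp (k : R) : 0 <= k -> k / (1 + k) <= 1 - exp (- k).
Proof.
move=> hk; have := exp_neg_le hk.
have -> : k / (1 + k) = 1 - / (1 + k) by field; lra.
lra.
Qed.

Lemma ln_half (z : R) : 0 < z -> ln z <= z / 2.
Proof.
move=> hz; rewrite -(ln_exp (z / 2)); apply: ln_le => //.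
have h := exp_ge_1x (z / 4).
have -> : exp (z / 2) = exp (z / 4) * exp (z / 4) by rewrite -exp_plus; f_equal; lra.
have h4 : 0 <= 1 + z / 4 by lra.
have : (1 + z / 4) * (1 + z / 4) <= exp (z / 4) * exp (z / 4) by apply: Rmult_le_compat.
have hsq : 0 <= (1 - z / 4) * (1 - z / 4) by apply: Rle_0_sqr.
have e : (1 + z / 4) * (1 + z / 4) = z + (1 - z / 4) * (1 - z / 4) by field.
lra.
Qed.

Lemma ln_1x (x : R) : 0 <= x -> ln (1 + x) <= x.
Proof.
move=> hx; rewrite -[X in _ <= X](ln_exp x); apply: ln_le; first lra.
exact: exp_ge_1x.
Qed.

Lemma exp_le_mono (x y : R) : x <= y -> exp x <= exp y.
Proof.
move=> h; case: (Rle_lt_or_eq_dec _ _ h) => [hl|->]; last lra.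
by apply: Rlt_le; apply: exp_increasing.
Qed.

Lemma leINR (a b : nat) : (a <= b)%N -> INR a <= INR b.
Proof. by move=> h; apply: le_INR; apply/leP. Qed.

Lemma ltINR (a b : nat) : (a < b)%N -> INR a < INR b.
Proof. by move=> h; apply: lt_INR; apply/ltP. Qed.

Lemma INRle (a b : nat) : INR a <= INR b -> (a <= b)%N.
Proof. by move=> h; apply/leP; apply: INR_le. Qed.

Lemma INRlt (a b : nat) : INR a < INR b -> (a < b)%N.
Proof. by move=> h; apply/ltP; apply: INR_lt. Qed.

Lemma sum_single (I : finType) (P : pred I) (F : I -> R) (i0 : I) :
  P i0 -> (forall i, P i -> 0 <= F i) -> F i0 <= \big[Rplus/0]_(i | P i) F i.
Proof.
move=> hi0 hF; rewrite (bigD1 i0) //=.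
have : 0 <= \big[Rplus/0]_(i | P i && (i != i0)) F i.
  by apply: sumR_ge0 => i /andP[hi _]; apply: hF.
lra.
Qed.


Lemma pow_le1' (x : R) (k : nat) : 0 <= x <= 1 -> x ^ k <= 1.
Proof. move=> h; apply: (Rle_trans _ (1 ^ k)); [exact: pow_incr| rewrite pow1; lra]. Qed.

Lemma budget_level (psi lamR L zinv : R) : 0 < psi <= 1 / 2 -> 1 <= lamR -> 0 <= L ->
  0 <= zinv ->
  lamR * (2 + 7 / psi ^ 2 * (2 + 2 / psi * (L + 6 / psi))) + 3 / psi * zinv <=
  48 / psi ^ 5 * (lamR * (1 + L) + zinv).
Proof.
move=> hp hl hL hz.
set t := / psi.
have ht : 2 <= t.
  rewrite /t; apply: (Rmult_le_reg_r psi); first lra.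
  rewrite Rinv_l; lra.
have e1 : 7 / psi ^ 2 * (2 + 2 / psi * (L + 6 / psi)) = 14 * t ^ 2 + 14 * t ^ 3 * L + 84 * t ^ 4.
  by rewrite /t; field; lra.
have e2 : 3 / psi = 3 * t by rewrite /t; field; lra.
have e3 : 48 / psi ^ 5 = 48 * t ^ 5 by rewrite /t; field; lra.
rewrite e1 e2 e3.
have ht2 : 4 <= t ^ 2 by nra.
have ht3 : 8 <= t ^ 3 by simpl; nra.
have ht4 : 16 <= t ^ 4 by simpl; nra.
have ht5 : 32 <= t ^ 5 by simpl; nra.
have p1 : 2 + 14 * t ^ 2 + 84 * t ^ 4 <= 48 * t ^ 5.
  have : t ^ 5 = t * t ^ 4 by simpl; ring.
  have : t ^ 4 = t ^ 2 * t ^ 2 by simpl; ring.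
  nra.
have p2 : 14 * t ^ 3 <= 48 * t ^ 5.
  have : t ^ 5 = t ^ 2 * t ^ 3 by simpl; ring.
  nra.
have p3 : 3 * t <= 48 * t ^ 5.
  have : t ^ 5 = t * t ^ 4 by simpl; ring.
  nra.
have q1 : lamR * (2 + 14 * t ^ 2 + 84 * t ^ 4) <= lamR * (48 * t ^ 5)
  by apply: Rmult_le_compat_l; lra.
have q2 : lamR * L * (14 * t ^ 3) <= lamR * L * (48 * t ^ 5)
  by apply: Rmult_le_compat_l; nra.
have q3 : zinv * (3 * t) <= zinv * (48 * t ^ 5) by apply: Rmult_le_compat_l; lra.
nra.
Qed.

Lemma budget_fall (psi delta gamma0 p0 sst lamR mR L : R) :
  0 < psi <= 1 / 2 -> 0 < delta -> 0 < gamma0 -> gamma0 * (1 + delta) <= p0 -> p0 <= 1 ->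
  0 < sst <= 1 -> 1 <= lamR -> 1 <= mR -> 0 <= L -> L <= psi ^ 4 / 24 * lamR ->
  ln (32 * mR * p0 / ((delta * gamma0) ^ 2 * (psi ^ 4 / 24) * sst * psi))
     <= delta ^ 2 * gamma0 / (2 * (1 + delta)) * lamR / 2 ->
  mR * (2 + 14 / psi ^ 2 + 84 / psi ^ 4 + 14 / psi ^ 3 * L
        + 3 / psi * (p0 / ((1 + delta) * gamma0 * sst)) / lamR)
    * exp (- (delta ^ 2 * gamma0 / (2 * (1 + delta))) * lamR) <= 1.
Proof.
move=> hp hd hg hgp hp1 hs hl hm hL hLc hC5.
set a := delta ^ 2 * gamma0 / (2 * (1 + delta)) in hC5 *.
set c := psi ^ 4 / 24 in hLc hC5 *.
have ha : 0 < a.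
  rewrite /a; apply: Rdiv_lt_0_compat; last lra.
  apply: Rmult_lt_0_compat; last lra; by apply: pow_lt.
have hc : 0 < c by rewrite /c; apply: Rdiv_lt_0_compat; [apply: pow_lt|]; lra.
have hp0 : 0 < p0 by nra.
have hdg : delta * gamma0 <= p0.
  have : delta * gamma0 <= gamma0 * (1 + delta) by nra.
  lra.
have hdg0 : 0 < delta * gamma0 by nra.
set A := 32 * mR * p0 / ((delta * gamma0) ^ 2 * c * sst * psi) in hC5.
have hden : 0 < (delta * gamma0) ^ 2 * c * sst * psi.
  apply: Rmult_lt_0_compat; last lra.
  apply: Rmult_lt_0_compat; last lra.
  by apply: Rmult_lt_0_compat => //; apply: pow_lt.
have hA : 0 < A by rewrite /A; apply: Rdiv_lt_0_compat => //; nra.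
set e := exp (- a * lamR / 2).
have he0 : 0 < e by apply: exp_pos.
have hAe : A * e <= 1.
  have hA2 : A <= exp (a * lamR / 2) by rewrite -(exp_ln A) //; apply: exp_le_mono.
  have ee : exp (a * lamR / 2) * e = 1 by rewrite /e -exp_plus -exp_0; f_equal; field.
  have := Rmult_le_compat_r e _ _ (Rlt_le _ _ he0) hA2; lra.
have he1 : e <= 1 by rewrite /e -exp_0; apply: exp_le_mono; nra.
have he2 : e * (a * lamR) <= 2.
  have h := exp_ge_1x (a * lamR / 2).
  have ee : exp (a * lamR / 2) * e = 1 by rewrite /e -exp_plus -exp_0; f_equal; field.
  have : (a * lamR / 2) * e <= exp (a * lamR / 2) * e.
    apply: Rmult_le_compat_r; lra.
  nra.
have hee : exp (- a * lamR) = e * e by rewrite /e -exp_plus; f_equal; field.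
rewrite (_ : - a * lamR = - (a * lamR)) in hee; last ring.
have hee' : exp (- (a * lamR)) = e * e by rewrite -hee; f_equal; ring.
have -> : - (delta ^ 2 * gamma0 / (2 * (1 + delta))) * lamR = - (a * lamR) by rewrite /a; ring.
rewrite hee'.
set mu := (delta * gamma0) ^ 2 * c * sst * psi / (32 * p0).
have hmuA : mR = A * mu by rewrite /A /mu; field; split; lra.
have hmu0 : 0 <= mu by rewrite /mu; apply: Rmult_le_pos; [nra| apply: Rlt_le; apply: Rinv_0_lt_compat; lra].
have hme : mR * e <= mu.
  rewrite hmuA; have := Rmult_le_compat_r mu _ _ hmu0 hAe; lra.
have hdg2 : (delta * gamma0) ^ 2 <= p0.
  have : (delta * gamma0) ^ 2 <= p0 * p0 by simpl; nra.
  nra.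
have hmu1 : mu <= c * psi / 32.
  rewrite /mu; apply: (Rmult_le_reg_r (32 * p0)); first lra.
  rewrite /Rdiv Rmult_assoc Rinv_l; last lra.
  have hcs : 0 <= c * sst * psi by apply: Rmult_le_pos; [nra| lra].
  have : (delta * gamma0) ^ 2 * (c * sst * psi) <= p0 * (c * psi).
    apply: Rmult_le_compat => //; [simpl; nra| nra].
  have -> : c * psi * / 32 * (32 * p0) = p0 * (c * psi) by field.
  have -> : (delta * gamma0) ^ 2 * c * sst * psi = (delta * gamma0) ^ 2 * (c * sst * psi) by ring.
  lra.
have hmua : mu / a <= c * psi / 16.
  have -> : mu / a = gamma0 * (1 + delta) * c * sst * psi / (16 * p0).
    rewrite /mu /a; field; repeat split; lra.
  apply: (Rmult_le_reg_r (16 * p0)); first lra.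
  rewrite /Rdiv Rmult_assoc Rinv_l; last lra.
  have -> : c * psi * / 16 * (16 * p0) = p0 * (c * psi) by field.
  have hcp : 0 <= c * psi by nra.
  have : gamma0 * (1 + delta) * (c * sst * psi) <= p0 * (c * psi).
    apply: Rmult_le_compat => //; [nra| nra| nra].
  have -> : gamma0 * (1 + delta) * c * sst * psi = gamma0 * (1 + delta) * (c * sst * psi) by ring.
  lra.
set B1 := 2 + 14 / psi ^ 2 + 84 / psi ^ 4.
set zi := p0 / ((1 + delta) * gamma0 * sst).
have hB1 : 0 <= B1 by rewrite /B1; apply: Rplus_le_le_0_compat; [apply: Rplus_le_le_0_compat|];
  try (apply: Rmult_le_pos; [lra| apply: Rlt_le; apply: Rinv_0_lt_compat; apply: pow_lt; lra]); lra.
have hzi : 0 <= zi by rewrite /zi; apply: Rmult_le_pos; [lra| apply: Rlt_le; apply: Rinv_0_lt_compat; nra].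
have hmee : mR * e * e <= c * psi / 32.
  have : mR * e * e <= mu * e by apply: Rmult_le_compat_r; lra.
  have : mu * e <= mu by have := Rmult_le_compat_l _ _ _ hmu0 he1; lra.
  lra.
have T1 : mR * B1 * (e * e) <= B1 * (c * psi / 32).
  have := Rmult_le_compat_l _ _ _ hB1 hmee.
  have -> : mR * B1 * (e * e) = B1 * (mR * e * e) by ring.
  done.
have T2 : mR * (14 / psi ^ 3 * L) * (e * e) <= 14 / psi ^ 3 * (c * (2 * (c * psi / 16))).
  have h14 : 0 <= 14 / psi ^ 3 by apply: Rmult_le_pos; [lra| apply: Rlt_le; apply: Rinv_0_lt_compat; apply: pow_lt; lra].
  have hLe : L * e <= c * lamR * e by apply: Rmult_le_compat_r; lra.
  have : mR * e * (L * e) <= mu * (c * lamR * e).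
    apply: Rmult_le_compat => //; nra.
  have hx : mu * (c * lamR * e) = c * (mu / a) * (e * (a * lamR)) by field; lra.
  have hma : 0 <= c * (mu / a).
    apply: Rmult_le_pos; [lra| apply: Rmult_le_pos; [lra| apply: Rlt_le; apply: Rinv_0_lt_compat; lra]].
  have hcm : c * (mu / a) <= c * (c * psi / 16) by apply: Rmult_le_compat_l; lra.
  have hea : 0 <= e * (a * lamR) by apply: Rmult_le_pos; nra.
  have : c * (mu / a) * (e * (a * lamR)) <= c * (c * psi / 16) * 2.
    by apply: Rmult_le_compat.
  move=> h1 h2.
  have := Rmult_le_compat_l _ _ _ h14 (Rle_trans _ _ _ h2 (Rle_trans _ _ _ (Req_le _ _ hx) h1)).
  move=> h3.
  have -> : mR * (14 / psi ^ 3 * L) * (e * e) = 14 / psi ^ 3 * (mR * e * (L * e)) by ring.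
  have -> : 14 / psi ^ 3 * (c * (2 * (c * psi / 16))) = 14 / psi ^ 3 * (c * (c * psi / 16) * 2) by ring.
  exact: h3.
have T3 : mR * (3 / psi * zi / lamR) * (e * e) <= 3 / psi * zi * mu.
  have h3z : 0 <= 3 / psi * zi by apply: Rmult_le_pos => //; apply: Rmult_le_pos; [lra| apply: Rlt_le; apply: Rinv_0_lt_compat; lra].
  have hil : / lamR <= 1 by rewrite -Rinv_1; apply: Rinv_le_contravar; lra.
  have hil0 : 0 <= / lamR by apply: Rlt_le; apply: Rinv_0_lt_compat; lra.
  have : mR * e * (e * / lamR) <= mu * 1.
    apply: Rmult_le_compat => //; try nra.
  move=> h; have := Rmult_le_compat_l _ _ _ h3z (Rle_trans _ _ _ h (Req_le _ _ (Rmult_1_r mu))).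
  have -> : mR * (3 / psi * zi / lamR) * (e * e) = 3 / psi * zi * (mR * e * (e * / lamR)) by field; lra.
  done.
have hcpsi : c * psi = psi ^ 5 / 24 by rewrite /c; field.
have N1 : B1 * (c * psi / 32) <= 1 / 3.
  rewrite hcpsi /B1.
  have -> : (2 + 14 / psi ^ 2 + 84 / psi ^ 4) * (psi ^ 5 / 24 / 32) =
            (2 * psi ^ 5 + 14 * psi ^ 3 + 84 * psi) / 768 by field; lra.
  have : psi ^ 5 <= 1 by apply: pow_le1'; lra.
  have : psi ^ 3 <= 1 by apply: pow_le1'; lra.
  lra.
have N2 : 14 / psi ^ 3 * (c * (2 * (c * psi / 16))) <= 1 / 3.
  rewrite hcpsi /c.
  have -> : 14 / psi ^ 3 * (psi ^ 4 / 24 * (2 * (psi ^ 5 / 24 / 16))) = 14 * psi ^ 6 / (24 * 24 * 8)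
    by field; lra.
  have : psi ^ 6 <= 1 by apply: pow_le1'; lra.
  lra.
have N3 : 3 / psi * zi * mu <= 1 / 3.
  have -> : 3 / psi * zi * mu = 3 * c / 32 * ((delta * gamma0) * (delta / (1 + delta))).
    by rewrite /zi /mu; field; repeat split; lra.
  have h1 : delta / (1 + delta) <= 1.
    apply: (Rmult_le_reg_r (1 + delta)); first lra.
    rewrite /Rdiv Rmult_assoc Rinv_l; lra.
  have h2 : 0 <= delta / (1 + delta) by apply: Rmult_le_pos; [lra| apply: Rlt_le; apply: Rinv_0_lt_compat; lra].
  have h3 : (delta * gamma0) * (delta / (1 + delta)) <= 1 by nra.
  have h4' : psi ^ 4 <= 1 by apply: pow_le1'; lra.
  have h4 : c <= 1 / 24 by rewrite /c; lra.
  have h5 : 0 <= (delta * gamma0) * (delta / (1 + delta)) by nra.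
  nra.
have -> : mR * (B1 + 14 / psi ^ 3 * L + 3 / psi * zi / lamR) * (e * e) =
   mR * B1 * (e * e) + mR * (14 / psi ^ 3 * L) * (e * e) + mR * (3 / psi * zi / lamR) * (e * e) by ring.
lra.
Qed.
Section Main.
Variables (n lam m : nat).
Variable Sel : pop n lam -> 'I_lam -> R.
Variable Cross : bits n -> bits n -> bits n -> R.
Variable Mut : bits n -> bits n -> R.
Variable lev : bits n -> nat.
Variable s : nat -> R.
Variables (s_star p0 eps delta gamma0 : R).
Hypothesis Hlam : (0 < lam)%N.
Hypothesis HSel : forall P, is_distr (Sel P).
Hypothesis HCross : forall u v, is_distr (Cross u v).
Hypothesis HMut : forall x, is_distr (Mut x).
Hypothesis Hlev : forall x, (1 <= lev x <= m.+1)%N.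
Hypothesis Hs : forall j, (1 <= j <= m)%N -> 0 < s j <= 1.
Hypothesis Hss : 0 < s_star <= 1.
Hypothesis Hp0 : 0 < p0 <= 1.
Hypothesis Heps : 0 < eps <= 1.
Hypothesis Hdelta : 0 < delta.
Hypothesis Hg0 : 0 < gamma0 < 1.
Hypothesis HC1 : forall j, (1 <= j <= m)%N ->
     (forall x, (j <= lev x)%N ->
        \big[Rplus/0]_(y : bits n | (j.+1 <= lev y)%N) Mut x y >= s j)
     /\ s j >= s_star.
Hypothesis HC2 : forall x, Mut x x >= p0.
Hypothesis HC3 : forall j, (1 <= j <= m - 1)%N -> forall u v,
     (j <= lev u)%N -> (j.+1 <= lev v)%N ->
     \big[Rplus/0]_(x : bits n | (j.+1 <= lev x)%N) Cross u v x >= eps.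
Hypothesis HC4 : forall gamma, 0 < gamma < gamma0 ->
     forall k : nat, INR k - 1 < gamma * INR lam <= INR k ->
     forall P : pop n lam, avoids lev m P ->
       beta_k Sel lev k P >= gamma * sqrt ((1 + delta) / (p0 * eps * gamma0)).
Variable k0 : nat.
Hypothesis Hk0 : INR k0 - 1 < gamma0 * INR lam <= INR k0.
Hypothesis Hg0p : gamma0 * (1 + delta) <= p0 * eps.

Local Notation off := (offspring Sel Cross Mut).
Local Notation ker := (kernel Sel Cross Mut).
Local Notation cnt := (@cnt n lam lev).
Local Notation lvl := (@lvl n lam m lev k0).
Local Notation Yc := (@Yc n lam m lev k0).

Definition KK := sqrt ((1 + delta) / (p0 * eps * gamma0)).

Lemma KK2 : KK * KK = (1 + delta) / (p0 * eps * gamma0).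
Proof.
rewrite /KK sqrt_sqrt //; apply: Rlt_le; apply: Rdiv_lt_0_compat; first lra.
apply: Rmult_lt_0_compat; [apply: Rmult_lt_0_compat|]; lra.
Qed.

Lemma KK_ge0 : 0 <= KK. Proof. exact: sqrt_pos. Qed.

Lemma lamR : 1 <= INR lam.
Proof. by have := leINR Hlam. Qed.

Lemma k0_ge1 : (1 <= k0)%N.
Proof.
have h : 0 < gamma0 * INR lam by apply: Rmult_lt_0_compat; [lra| have := lamR; lra].
by apply: (@INRlt 0); rewrite /=; lra.
Qed.

Lemma k0_le : (k0 <= lam)%N.
Proof.
have : INR k0 < INR lam.+1.
  rewrite S_INR; have := lamR; nra.
by move/INRlt.
Qed.

Lemma cnt_real (X : nat) : (k0 <= X)%N <-> gamma0 * INR lam <= INR X.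
Proof.
split=> h.
- by have := leINR h; lra.
- case: (ltnP X k0) => // hX; exfalso.
  have : INR X.+1 <= INR k0 by apply: leINR.
  rewrite S_INR; lra.
Qed.

Lemma cnt_real_lt (X : nat) : (X < k0)%N -> INR X < gamma0 * INR lam.
Proof.
move=> h; case: (Rlt_le_dec (INR X) (gamma0 * INR lam)) => // h'.
by move/cnt_real: h'; rewrite leqNgt h.
Qed.

Lemma beta_ge0 k P : 0 <= beta_k Sel lev k P.
Proof. by apply: sumR_ge0 => i _; apply: Sel_ge0. Qed.

Lemma beta_le1 k P : beta_k Sel lev k P <= 1.
Proof.
case: (HSel P) => h0 h1; rewrite -h1 /beta_k.
by apply: sumR_sub => // i _; apply: h0.
Qed.

Lemma beta_k0 P : avoids lev m P -> gamma0 * KK <= beta_k Sel lev k0 P.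
Proof.
move=> hP; set b := beta_k Sel lev k0 P.
case: (Rle_lt_dec (gamma0 * KK) b) => // hb; exfalso.
have hK : 0 < KK.
  case: (Rle_lt_or_eq_dec _ _ KK_ge0) => // hK0.
  have := KK2; rewrite -hK0 Rmult_0_r => h.
  have : 0 < (1 + delta) / (p0 * eps * gamma0).
    apply: Rdiv_lt_0_compat; first lra.
    apply: Rmult_lt_0_compat; [apply: Rmult_lt_0_compat|]; lra.
  lra.
have hl := lamR.
set M := Rmax (Rmax ((INR k0 - 1) / INR lam) (b / KK)) 0.
have hM1 : (INR k0 - 1) / INR lam < gamma0.
  apply/(Rmult_lt_reg_r (INR lam)); first lra.
  by rewrite /Rdiv Rmult_assoc Rinv_l; lra.
have hM2 : b / KK < gamma0.
  apply/(Rmult_lt_reg_r KK) => //.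
  by rewrite /Rdiv Rmult_assoc Rinv_l; lra.
have hM : M < gamma0.
  rewrite /M; apply: Rmax_lub_lt; last lra.
  by apply: Rmax_lub_lt.
set g := (gamma0 + M) / 2.
have hg1 : 0 < g < gamma0.
  have : 0 <= M by apply: Rmax_r.
  rewrite /g; lra.
have hg2 : INR k0 - 1 < g * INR lam <= INR k0.
  have h1 : (INR k0 - 1) / INR lam <= M.
    rewrite /M; apply: Rle_trans (Rmax_l _ _); apply: Rmax_l.
  have h2 : (INR k0 - 1) / INR lam < g by rewrite /g; lra.
  split.
  - apply/(Rmult_lt_reg_r (/ INR lam)); first by apply: Rinv_0_lt_compat; lra.
    rewrite Rmult_assoc Rinv_r; lra.
  - have : g * INR lam <= gamma0 * INR lam by apply: Rmult_le_compat_r; lra.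
    lra.
have := HC4 hg1 hg2 hP; rewrite -/KK -/b => h.
have h3 : b / KK <= M by rewrite /M; apply: Rle_trans (Rmax_l _ _); apply: Rmax_r.
have h4 : b / KK < g by rewrite /g; lra.
have : b < g * KK.
  apply/(Rmult_lt_reg_r (/ KK)); first by apply: Rinv_0_lt_compat.
  by rewrite Rmult_assoc Rinv_r; lra.
lra.
Qed.

Lemma beta_Y P k : avoids lev m P -> (1 <= k)%N -> INR k < gamma0 * INR lam ->
  INR k / INR lam * KK <= beta_k Sel lev k P.
Proof.
move=> hP hk hkg.
have hl := lamR.
have hg : 0 < INR k / INR lam < gamma0.
  split.
  - apply: Rdiv_lt_0_compat; last lra.
    by have := leINR hk; rewrite /=; lra.
  - apply/(Rmult_lt_reg_r (INR lam)); first lra.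
    by rewrite /Rdiv Rmult_assoc Rinv_l; lra.
have hk2 : INR k - 1 < INR k / INR lam * INR lam <= INR k.
  by rewrite /Rdiv Rmult_assoc Rinv_l; lra.
by have := Rge_le _ _ (HC4 hg hk2 hP).
Qed.



Definition pB j (P : pop n lam) := \big[Rplus/0]_(y | (j <= lev y)%N) off P y.

Lemma prod4_le (a b x y e mu : R) : 0 <= a -> 0 <= b -> 0 <= e -> 0 <= mu ->
  a <= x -> b <= y -> a * b * e * mu <= x * y * e * mu.
Proof.
move=> ha hb he hmu hx hy.
apply: Rmult_le_compat_r => //; apply: Rmult_le_compat_r => //.
by apply: Rmult_le_compat.
Qed.

Lemma lvl_range (P : pop n lam) : avoids lev m P -> (1 <= lvl P)%N /\ (lvl P <= m)%N.
Proof.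
move=> hP; have hm := avoid_m Hlam Hlev hP.
split; last exact: lvl_le.
apply: lvl_ge1; by [exact: Hlev| exact: k0_le| exact: hm].
Qed.

Lemma rank_lvl (P : pop n lam) i : avoids lev m P ->
  (rank_level lev P k0 <= lev (P i))%N -> (lvl P <= lev (P i))%N.
Proof.
move=> hP h; apply: leq_trans h.
apply: rank_ge; first exact: k0_ge1.
apply: lvl_cond; by [exact: Hlev| exact: k0_le].
Qed.

Lemma sum_all_lev (u v : bits n) :
  \big[Rplus/0]_(x | (1 <= lev x)%N) Cross u v x = 1.
Proof.
case: (HCross u v) => _ <-; apply: eq_bigl => x.
by case/andP: (Hlev x) => ->.
Qed.

Lemma cross_lvl l u v : (1 <= l <= m)%N -> (l <= lev u)%N -> (l <= lev v)%N ->
  eps <= \big[Rplus/0]_(x | (l <= lev x)%N) Cross u v x.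
Proof.
case/andP=> hl1 hlm hu hv.
case: l hl1 hlm hu hv => [//|[|l]] _ hlm hu hv.
- rewrite sum_all_lev; lra.
- apply: Rge_le; apply: (HC3 (j := l.+1)) => //.
  + by apply/andP; split; lia.
  + by apply: leq_trans hu.
Qed.

Lemma pG1 (P : pop n lam) : avoids lev m P ->
  (1 + delta) * gamma0 * s (lvl P) / p0 <= pB (lvl P).+1 P.
Proof.
move=> hP; case: (lvl_range hP) => hl1 hlm.
set l := lvl P in hl1 hlm *.
have hsl := Hs (j := l) ltac:(by rewrite hl1 hlm).
have hb := beta_k0 hP; have hK := KK_ge0.
have := @off_lb _ _ _ _ _ HSel HCross HMut P
  [pred i | (rank_level lev P k0 <= lev (P i))%N]
  [pred i | (rank_level lev P k0 <= lev (P i))%N]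
  [pred x | (l <= lev x)%N] [pred y | (l.+1 <= lev y)%N] eps (s l).
rewrite /= -/(pB _ P) => H.
apply: leR_trans (H _ _ _ _); last first.
- lra.
- lra.
- move=> x hx; apply: Rge_le; case: (HC1 (j := l) ltac:(by rewrite hl1 hlm)) => h _.
  exact: h.
- move=> i i' hi hi'; apply: cross_lvl; first by rewrite hl1 hlm.
  + exact: rank_lvl hi.
  + exact: rank_lvl hi'.
have hg : 0 <= gamma0 * KK by apply: Rmult_le_pos; lra.
apply: leR_trans (prod4_le hg hg _ _ hb hb); try lra.
have -> : gamma0 * KK * (gamma0 * KK) * eps * s l =
   gamma0 * gamma0 * (KK * KK) * eps * s l by ring.
rewrite KK2; apply: Req_le; field; lra.
Qed.



Lemma mut_stay l x : (l <= lev x)%N ->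
  p0 <= \big[Rplus/0]_(y | (l <= lev y)%N) Mut x y.
Proof.
move=> hx; apply: leR_trans _ (sum_single (P := fun y => (l <= lev y)%N) (F := Mut x) hx _).
- by apply: Rge_le; apply: HC2.
- by move=> y _; apply: Mut_ge0.
Qed.

Lemma Yc_ge_lvl (P : pop n lam) : avoids lev m P -> (1 <= Yc P)%N -> (lvl P < m)%N.
Proof.
move=> hP hY; case: (lvl_range hP) => _ hlm.
rewrite ltn_neqAle hlm andbT; apply/eqP => he.
by move: hY; rewrite /Yc he (cnt_avoid hP).
Qed.

Lemma pG2 (P : pop n lam) : avoids lev m P -> (1 <= Yc P)%N ->
  (1 + delta) * INR (Yc P) / INR lam <= pB (lvl P).+1 P.
Proof.
move=> hP hY; case: (lvl_range hP) => hl1 hlm.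
have hlm' := Yc_ge_lvl hP hY.
have hYlt : INR (Yc P) < gamma0 * INR lam.
  apply: cnt_real_lt; apply: Yc_lt hP; by [exact: Hlev| exact: k0_le| exact: k0_ge1].
set l := lvl P in hl1 hlm hlm' *; set Y := Yc P in hY hYlt *.
have hb := beta_k0 hP; have hK := KK_ge0.
have hbY := beta_Y hP hY hYlt.
have := @off_lb _ _ _ _ _ HSel HCross HMut P
  [pred i | (rank_level lev P k0 <= lev (P i))%N]
  [pred i | (rank_level lev P Y <= lev (P i))%N]
  [pred x | (l.+1 <= lev x)%N] [pred y | (l.+1 <= lev y)%N] eps p0.
rewrite /= -/(pB _ P) => H.
apply: leR_trans (H _ _ _ _); last first.
- lra.
- lra.
- move=> x hx; exact: mut_stay.
- move=> i i' hi hi'; apply: Rge_le; apply: HC3.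
  + by apply/andP; split; lia.
  + exact: rank_lvl hi.
  + apply: leq_trans hi'; apply: rank_ge => //.
have hg : 0 <= gamma0 * KK by apply: Rmult_le_pos; lra.
have hl := lamR.
have hg2 : 0 <= INR Y / INR lam * KK.
  apply: Rmult_le_pos => //; apply: Rmult_le_pos; first exact: pos_INR.
  by apply: Rlt_le; apply: Rinv_0_lt_compat; lra.
apply: leR_trans (prod4_le hg hg2 _ _ hb hbY); try lra.
have -> : gamma0 * KK * (INR Y / INR lam * KK) * eps * p0 =
   gamma0 * (KK * KK) * (INR Y / INR lam) * eps * p0 by ring.
rewrite KK2; apply: Req_le; field; lra.
Qed.

Lemma pFall (P : pop n lam) : avoids lev m P -> (2 <= lvl P)%N ->
  (1 + delta) * gamma0 <= pB (lvl P) P.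
Proof.
move=> hP hl2; case: (lvl_range hP) => hl1 hlm.
set l := lvl P in hl1 hlm hl2 *.
have hb := beta_k0 hP; have hK := KK_ge0.
have := @off_lb _ _ _ _ _ HSel HCross HMut P
  [pred i | (rank_level lev P k0 <= lev (P i))%N]
  [pred i | (rank_level lev P k0 <= lev (P i))%N]
  [pred x | (l <= lev x)%N] [pred y | (l <= lev y)%N] eps p0.
rewrite /= -/(pB _ P) => H.
apply: leR_trans (H _ _ _ _); last first.
- lra.
- lra.
- move=> x hx; exact: mut_stay.
- move=> i i' hi hi'; apply: cross_lvl; first by rewrite hl1 hlm.
  + exact: rank_lvl hi.
  + exact: rank_lvl hi'.
have hg : 0 <= gamma0 * KK by apply: Rmult_le_pos; lra.
apply: leR_trans (prod4_le hg hg _ _ hb hb); try lra.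
have -> : gamma0 * KK * (gamma0 * KK) * eps * p0 =
   gamma0 * gamma0 * (KK * KK) * eps * p0 by ring.
rewrite KK2; apply: Req_le; field; lra.
Qed.



Lemma exp_cnt j (kap : R) (Q : pop n lam) :
  exp (- kap * INR (cnt j Q)) =
  \big[Rmult/1]_(i : 'I_lam) (if (j <= lev (Q i))%N then exp (- kap) else 1).
Proof. by rewrite exp_INR_mul prod_if. Qed.

Lemma off_if (P : pop n lam) j (e : R) :
  \big[Rplus/0]_(y : bits n) (off P y * (if (j <= lev y)%N then e else 1)) =
  1 - (1 - e) * pB j P.
Proof.
have -> : \big[Rplus/0]_(y : bits n) (off P y * (if (j <= lev y)%N then e else 1)) =
  \big[Rplus/0]_(y : bits n) (off P y + (if (j <= lev y)%N then (e - 1) * off P y else 0)).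
  by apply: eq_bigr => y _; case: ifP => _; ring.
rewrite big_split /= (off_sum1 HSel HCross HMut) -big_mkcond /= sumR_scal -/(pB j P).
ring.
Qed.

Lemma Eexp (P : pop n lam) j (kap : R) :
  \big[Rplus/0]_(Q : pop n lam) (ker P Q * exp (- kap * INR (cnt j Q))) =
  (1 - (1 - exp (- kap)) * pB j P) ^ lam.
Proof.
rewrite -off_if -(ker_prod Sel Cross Mut P).
by apply: eq_bigr => Q _; rewrite exp_cnt.
Qed.

Lemma pB_ge0 j P : 0 <= pB j P.
Proof. by apply: sumR_ge0 => y _; apply: off_ge0. Qed.

Lemma pB_le1 j P : pB j P <= 1.
Proof. exact: off_sumB_le1. Qed.

Lemma Epow_mono (u p plo : R) : 0 <= u <= 1 -> 0 <= plo <= p -> p <= 1 ->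
  (1 - u * p) ^ lam <= (1 - u * plo) ^ lam.
Proof.
move=> hu hp hp1; apply: pow_incr; split; nra.
Qed.

Lemma exp_neg_ln (d : R) : 0 < d -> exp (- ln (1 + d)) = / (1 + d).
Proof. by move=> hd; rewrite exp_Ropp exp_ln; lra. Qed.

Definition Pf (P : pop n lam) :=
  \big[Rplus/0]_(Q : pop n lam) (ker P Q * (if (cnt (lvl P) Q < k0)%N then 1 else 0)).

Lemma Pf_ge0 P : 0 <= Pf P.
Proof.
apply: sumR_ge0 => Q _; apply: Rmult_le_pos; first exact: ker_ge0.
by case: ifP => _; lra.
Qed.

Lemma Pf_bound (P : pop n lam) : avoids lev m P ->
  Pf P <= exp (- (delta ^ 2 * gamma0 / (2 * (1 + delta))) * INR lam).
Proof.
move=> hP; case: (lvl_range hP) => hl1 hlm.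
have hl := lamR.
case: (ltnP 1 (lvl P)) => hl2; last first.
  have e1 : lvl P = 1%N by apply/eqP; rewrite eqn_leq hl1 hl2.
  rewrite /Pf e1; apply: leR_trans _ (Rlt_le _ _ (exp_pos _)).
  apply: Req_le; apply: big1 => Q _.
  rewrite (cnt1 Hlev) ltnNge k0_le /=; ring.
set kap := ln (1 + delta).
have hkap : 0 <= kap by rewrite /kap -ln_1; apply: ln_le; lra.
set p := pB (lvl P) P.
have hp := pFall hP hl2; rewrite -/p in hp.
have hdg : delta * gamma0 <= 1.
  have : gamma0 * (1 + delta) <= 1 by nra.
  nra.
have step1 : Pf P <= exp (kap * gamma0 * INR lam) *
    \big[Rplus/0]_(Q : pop n lam) (ker P Q * exp (- kap * INR (cnt (lvl P) Q))).
  rewrite /Pf big_distrr /=; apply: sumR_le => Q _.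
  have hk := ker_ge0 HSel HCross HMut P Q.
  case: ifP => hc.
  - have hr := cnt_real_lt hc.
    have : 1 <= exp (kap * gamma0 * INR lam) * exp (- kap * INR (cnt (lvl P) Q)).
      rewrite -exp_plus; rewrite -exp_0; apply: exp_le_mono; nra.
    nra.
  - rewrite Rmult_0_r; apply: Rmult_le_pos; first by apply: Rlt_le; exact: exp_pos.
    by apply: Rmult_le_pos => //; apply: Rlt_le; exact: exp_pos.
rewrite Eexp -/p exp_neg_ln // in step1.
have hu : 1 - / (1 + delta) = delta / (1 + delta) by field; lra.
rewrite hu in step1.
have step2 : (1 - delta / (1 + delta) * p) ^ lam <=
             (1 - delta / (1 + delta) * ((1 + delta) * gamma0)) ^ lam.
  apply: Epow_mono; last exact: pB_le1.
  - split; first by apply: Rlt_le; apply: Rdiv_lt_0_compat; lra.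
    apply: (Rmult_le_reg_r (1 + delta)); first lra.
    rewrite /Rdiv Rmult_assoc Rinv_l; lra.
  - split => //; apply: Rmult_le_pos; lra.
rewrite (_ : delta / (1 + delta) * ((1 + delta) * gamma0) = delta * gamma0) in step2;
  last by field; lra.
have step3 := pow_le_exp lam (x := delta * gamma0) hdg.
have hlb := ln_bound (Rlt_le _ _ Hdelta); rewrite -/kap in hlb.
apply: leR_trans step1 _.
apply: leR_trans (Rmult_le_compat_l _ _ _ (Rlt_le _ _ (exp_pos _)) (Rle_trans _ _ _ step2 step3)) _.
rewrite -exp_plus; apply: exp_le_mono.
have : (kap - delta) * gamma0 <= - (delta ^ 2 * gamma0 / (2 * (1 + delta))).
  have -> : - (delta ^ 2 * gamma0 / (2 * (1 + delta))) =
             (- (delta ^ 2 / (2 * (1 + delta)))) * gamma0 by field; lra.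
  apply: Rmult_le_compat_r; lra.
move=> h; have := Rmult_le_compat_r (INR lam) _ _ (pos_INR lam) h.
lra.
Qed.



Definition psi := Rmin (delta / 2) (1 / 2).

Lemma psi_b : 0 < psi <= 1 / 2 /\ 2 * psi <= delta.
Proof.
rewrite /psi; split; first split.
- by apply: Rmin_glb_lt; lra.
- exact: Rmin_r.
- have := Rmin_l (delta / 2) (1 / 2); lra.
Qed.

Definition rho := (1 + 2 * psi) / (1 + psi).
Definition u0 := 1 - exp (- psi).
Definition zz j := (1 + delta) * gamma0 * s j / p0.
Definition piJ j := 1 - (1 - zz j * u0) ^ lam.
Definition W j := 2 / piJ j.
Variable RR : nat.
Hypothesis HR1 : 2 * psi * gamma0 * INR lam <= rho ^ RR.
Definition kap r := psi / rho ^ r.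
Definition C1 := 7 / psi ^ 2.
Definition H0 := C1 * INR RR.+1.
Definition hh (Y : nat) := C1 * \big[Rplus/0]_(r < RR.+1) exp (- kap r * INR Y).
Definition FF l := \big[Rplus/0]_(l.+1 <= j < m.+1) (W j + H0).
Definition gg (P : pop n lam) :=
  FF (lvl P) + W (lvl P) * exp (- psi * INR (Yc P)) + hh (Yc P).
Definition gA (Q : pop n lam) := if avoids lev m Q then gg Q else 0.

Lemma rho_ge1 : 1 <= rho.
Proof.
case: psi_b => [[h1 h2] _]; rewrite /rho.
apply: (Rmult_le_reg_r (1 + psi)); first lra.
rewrite /Rdiv Rmult_assoc Rinv_l; lra.
Qed.

Lemma rho_pos : 0 < rho.
Proof. have := rho_ge1; lra. Qed.

Lemma u0_b : psi / (1 + psi) <= u0 <= 1.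
Proof.
case: psi_b => [[h1 h2] _]; split; first by apply: one_minus_exp; lra.
by have := exp_pos (- psi); rewrite /u0; lra.
Qed.

Lemma u0_pos : 0 < u0.
Proof.
case: psi_b => [[h1 h2] _]; have := u0_b.
have : 0 < psi / (1 + psi) by apply: Rdiv_lt_0_compat; lra.
lra.
Qed.

Lemma zz_b j : (1 <= j <= m)%N -> 0 < zz j <= 1.
Proof.
move=> hj; have [hs1 hs2] := Hs hj; rewrite /zz; split.
- apply: Rdiv_lt_0_compat; last lra.
  apply: Rmult_lt_0_compat; last lra.
  apply: Rmult_lt_0_compat; lra.
- apply: (Rmult_le_reg_r p0); first lra.
  rewrite /Rdiv Rmult_assoc Rinv_l; last lra.
  have : (1 + delta) * gamma0 <= p0 by nra.
  nra.
Qed.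

Lemma pow_le_self (x : R) (k : nat) : 0 <= x <= 1 -> (1 <= k)%N -> x ^ k <= x.
Proof.
move=> hx; case: k => [//|k] _ /=.
have : x ^ k <= 1 by rewrite -(pow1 k); apply: pow_incr.
nra.
Qed.

Lemma piJ_b j : (1 <= j <= m)%N -> zz j * u0 <= piJ j <= 1.
Proof.
move=> hj; have hz := zz_b hj; have hu := u0_b; have hu0 := u0_pos.
have h0 : 0 <= 1 - zz j * u0 <= 1 by split; nra.
rewrite /piJ; split.
- have := pow_le_self h0 Hlam; lra.
- have := pow_ge0 lam (proj1 h0); lra.
Qed.

Lemma piJ_pos j : (1 <= j <= m)%N -> 0 < piJ j.
Proof.
move=> hj; have [h _] := piJ_b hj; have := zz_b hj; have := u0_pos; nra.
Qed.

Lemma W_ge0 j : (1 <= j <= m)%N -> 0 <= W j.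
Proof.
move=> hj; rewrite /W; apply: Rlt_le; apply: Rdiv_lt_0_compat; first lra.
exact: piJ_pos.
Qed.

Lemma W_piJ j : (1 <= j <= m)%N -> W j * piJ j = 2.
Proof. move=> hj; have h := piJ_pos hj; rewrite /W; field; lra. Qed.

Lemma C1_pos : 0 < C1.
Proof.
case: psi_b => [[h1 h2] _]; rewrite /C1; apply: Rdiv_lt_0_compat; first lra.
by apply: pow_lt.
Qed.

Lemma kap_ge0 r : 0 <= kap r.
Proof.
case: psi_b => [[h1 h2] _]; rewrite /kap; apply: Rlt_le; apply: Rdiv_lt_0_compat => //.
by apply: pow_lt; exact: rho_pos.
Qed.

Lemma H0_ge0 : 0 <= H0.
Proof. by rewrite /H0; apply: Rmult_le_pos; [have := C1_pos; lra| exact: pos_INR]. Qed.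

Lemma hh_b Y : 0 <= hh Y <= H0.
Proof.
have hC := C1_pos; rewrite /hh /H0; split.
- apply: Rmult_le_pos; first lra.
  by apply: sumR_ge0 => r _; apply: Rlt_le; apply: exp_pos.
- apply: Rmult_le_compat_l; first lra.
  have -> : INR RR.+1 = \big[Rplus/0]_(r < RR.+1) 1.
    by rewrite sumR_const card_ord Rmult_1_r.
  apply: sumR_le => r _; rewrite -exp_0; apply: exp_le_mono.
  have := kap_ge0 r; have := pos_INR Y; nra.
Qed.

Lemma hh0 : hh 0 = H0.
Proof.
rewrite /hh /H0; congr Rmult.
rewrite (eq_bigr (fun _ => 1)); first by rewrite sumR_const card_ord Rmult_1_r.
by move=> r _; rewrite /= Rmult_0_r exp_0.
Qed.

Lemma FF_ge0 l : 0 <= FF l.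
Proof.
rewrite /FF big_nat_cond; apply: sumR_ge0 => j /andP[/andP[h1 h2] _].
have := H0_ge0; have : 0 <= W j by apply: W_ge0; apply/andP; split; lia.
lra.
Qed.

Lemma FF_step l : (1 <= l <= m)%N -> FF l.-1 = W l + H0 + FF l.
Proof.
case/andP=> h1 h2; rewrite /FF prednK //; rewrite big_ltn //.
Qed.

Lemma FF_anti l l' : (l <= l')%N -> FF l' <= FF l.
Proof.
move=> hl; rewrite /FF.
case: (leqP l'.+1 m.+1) => hl'.
- rewrite [X in _ <= X](big_cat_nat _ (n := l'.+1)) //=.
  have : 0 <= \big[Rplus/0]_(l.+1 <= i < l'.+1) (W i + H0).
    rewrite big_nat_cond; apply: sumR_ge0 => j /andP[/andP[h1 h3] _].
    have := H0_ge0; have : 0 <= W j by apply: W_ge0; apply/andP; split; lia.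
    lra.
  lra.
- rewrite big_geq; last lia.
  exact: FF_ge0.
Qed.

Lemma gg_b (Q : pop n lam) : avoids lev m Q -> 0 <= gg Q <= FF (lvl Q).-1.
Proof.
move=> hQ; case: (lvl_range hQ) => h1 h2.
have hl : (1 <= lvl Q <= m)%N by rewrite h1 h2.
rewrite (FF_step hl) /gg.
have hW := W_ge0 hl; have he := exp_pos (- psi * INR (Yc Q)).
have he1 : exp (- psi * INR (Yc Q)) <= 1.
  rewrite -exp_0; apply: exp_le_mono.
  case: psi_b => [[h3 h4] _]; have := pos_INR (Yc Q); nra.
have := hh_b (Yc Q); have := FF_ge0 (lvl Q).
split; nra.
Qed.

Definition Gmax := FF 0.

Lemma gg_Gmax (Q : pop n lam) : avoids lev m Q -> gg Q <= Gmax.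
Proof.
move=> hQ; have [_ h] := gg_b hQ; apply: leR_trans h _.
by apply: FF_anti.
Qed.



Definition aa := delta ^ 2 * gamma0 / (2 * (1 + delta)).
Hypothesis HGbud : Gmax * exp (- aa * INR lam) <= 1.

Lemma telescope (Y : R) (N : nat) :
  \big[Rplus/0]_(r < N.+1) (exp (- kap r * Y) - exp (- (rho * kap r) * Y)) =
  exp (- kap N * Y) - exp (- (rho * psi) * Y).
Proof.
have hr := rho_pos.
elim: N => [|N IH].
- rewrite big_ord_recr big_ord0 /= /kap /= Rdiv_1_r; ring.
- rewrite big_ord_recr /= IH.
  have -> : rho * kap N.+1 = kap N by rewrite /kap /=; field; split; [apply: pow_nonzero|]; lra.
  ring.
Qed.

Lemma expY (P : pop n lam) (k : R) : avoids lev m P -> (1 <= Yc P)%N ->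
  0 <= k <= psi ->
  (1 - (1 - exp (- k)) * pB (lvl P).+1 P) ^ lam <= exp (- (rho * k) * INR (Yc P)).
Proof.
move=> hP hY hk; have hp := pG2 hP hY.
case: psi_b => [[hs1 hs2] hsd].
have hl := lamR.
set p := pB (lvl P).+1 P in hp *.
set Y := INR (Yc P) in hp *.
have hp0 := pB_ge0 (lvl P).+1 P; have hp1 := pB_le1 (lvl P).+1 P.
rewrite -/p in hp0 hp1.
set u := 1 - exp (- k).
have hu : k / (1 + k) <= u <= 1.
  split; first by apply: one_minus_exp; lra.
  by have := exp_pos (- k); rewrite /u; lra.
have hu0 : 0 <= u.
  have : 0 <= k / (1 + k) by apply: Rmult_le_pos; [lra| apply: Rlt_le; apply: Rinv_0_lt_compat; lra].
  lra.
have hupl : u * p <= 1 by nra.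
apply: leR_trans (pow_le_exp lam hupl) _.
apply: exp_le_mono.
have hY0 : 0 <= Y by apply: pos_INR.
have h1 : (1 + delta) * Y <= p * INR lam.
  apply: (Rmult_le_reg_r (/ INR lam)); first by apply: Rinv_0_lt_compat; lra.
  have e : p * INR lam * / INR lam = p by field; lra.
  by rewrite e.
have h2 : rho * k <= u * (1 + delta).
  have hk1 : k / (1 + k) * (1 + delta) >= rho * k.
    rewrite /rho; apply: Rle_ge.
    have -> : k / (1 + k) * (1 + delta) = k * ((1 + delta) / (1 + k)) by field; lra.
    have -> : (1 + 2 * psi) / (1 + psi) * k = k * ((1 + 2 * psi) / (1 + psi)) by ring.
    apply: Rmult_le_compat_l; first lra.
    have e : (1 + delta) / (1 + k) - (1 + 2 * psi) / (1 + psi) =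
      ((1 + delta) * (1 + psi) - (1 + 2 * psi) * (1 + k)) * / ((1 + k) * (1 + psi)).
      by field; lra.
    have : 0 <= ((1 + delta) * (1 + psi) - (1 + 2 * psi) * (1 + k)) * / ((1 + k) * (1 + psi)).
      apply: Rmult_le_pos; first nra.
      by apply: Rlt_le; apply: Rinv_0_lt_compat; nra.
    lra.
  have : k / (1 + k) * (1 + delta) <= u * (1 + delta) by apply: Rmult_le_compat_r; lra.
  lra.
have : rho * k * Y <= u * (1 + delta) * Y by apply: Rmult_le_compat_r.
have : u * ((1 + delta) * Y) <= u * (p * INR lam) by apply: Rmult_le_compat_l; lra.
nra.
Qed.

Lemma E_le1 (k p : R) : 0 <= k -> 0 <= p <= 1 -> (1 - (1 - exp (- k)) * p) ^ lam <= 1.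
Proof.
move=> hk hp; have h := exp_pos (- k).
have : exp (- k) <= 1 by rewrite -exp_0; apply: exp_le_mono; lra.
move=> h1; apply: (Rle_trans _ (1 ^ lam)); last by rewrite pow1; lra.
apply: pow_incr; split; nra.
Qed.



Definition Psi (P Q : pop n lam) :=
  FF (lvl P) + W (lvl P) * exp (- psi * INR (cnt (lvl P).+1 Q)) + hh (cnt (lvl P).+1 Q).
Definition fI (P Q : pop n lam) : R := if (cnt (lvl P) Q < k0)%N then 1 else 0.

Lemma Gmax_ge0 : 0 <= Gmax. Proof. exact: FF_ge0. Qed.

Lemma gA_bound (P Q : pop n lam) : avoids lev m P -> gA Q <= Psi P Q + Gmax * fI P Q.
Proof.
move=> hP; case: (lvl_range hP) => hl1 hlm.
have hl : (1 <= lvl P <= m)%N by rewrite hl1 hlm.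
have hPsi : 0 <= Psi P Q.
  rewrite /Psi; have := FF_ge0 (lvl P); have := W_ge0 hl.
  have := exp_pos (- psi * INR (cnt (lvl P).+1 Q)); have := hh_b (cnt (lvl P).+1 Q).
  move=> [h1 _] h2 h3 h4; have := Rmult_le_pos _ _ h3 (Rlt_le _ _ h2); lra.
have hG := Gmax_ge0.
have hfI : 0 <= fI P Q by rewrite /fI; case: ifP => _; lra.
rewrite /gA; case: ifP => hQ; last by have := Rmult_le_pos _ _ hG hfI; lra.
rewrite /fI; case: ifP => hc.
  by have := gg_Gmax hQ; lra.
rewrite Rmult_0_r Rplus_0_r.
have hc' : (k0 <= cnt (lvl P) Q)%N by rewrite leqNgt hc.
have hle : (lvl P <= lvl Q)%N by apply: lvl_sup.
case: (ltnP (lvl P) (lvl Q)) => hlt.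
- have [_ h] := gg_b hQ; apply: leR_trans h _.
  apply: leR_trans (FF_anti (l := lvl P) (l' := (lvl Q).-1) _) _; first lia.
  rewrite /Psi; have := exp_pos (- psi * INR (cnt (lvl P).+1 Q)); have := hh_b (cnt (lvl P).+1 Q).
  have := W_ge0 hl; move=> h1 h2 h3.
  have := Rmult_le_pos _ _ h1 (Rlt_le _ _ h3); lra.
- have e : lvl Q = lvl P by apply/eqP; rewrite eqn_leq hlt hle.
  by rewrite /gg /Psi /Yc e; lra.
Qed.

Definition EE (P : pop n lam) (k : R) := (1 - (1 - exp (- k)) * pB (lvl P).+1 P) ^ lam.

Lemma sum_Psi (P : pop n lam) :
  \big[Rplus/0]_(Q : pop n lam) (ker P Q * (Psi P Q + Gmax * fI P Q)) =
  FF (lvl P) + W (lvl P) * EE P psi + C1 * \big[Rplus/0]_(r < RR.+1) EE P (kap r)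
  + Gmax * Pf P.
Proof.
set l := lvl P.
rewrite (eq_bigr (fun Q => FF l * ker P Q + W l * (ker P Q * exp (- psi * INR (cnt l.+1 Q)))
   + C1 * (ker P Q * \big[Rplus/0]_(r < RR.+1) exp (- kap r * INR (cnt l.+1 Q)))
   + Gmax * (ker P Q * fI P Q))); last first.
  by move=> Q _; rewrite /Psi /hh /l; ring.
rewrite !big_split /= !sumR_scal (ker_sum1 HSel HCross HMut P) Rmult_1_r.
rewrite Eexp.
rewrite (eq_bigr (fun Q => \big[Rplus/0]_(r < RR.+1) (ker P Q * exp (- kap r * INR (cnt l.+1 Q)))));
  last by move=> Q _; rewrite sumR_scal.
rewrite exchange_big /=.
rewrite (eq_bigr (fun r : 'I_RR.+1 => EE P (kap r))); last by move=> r _; rewrite Eexp.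
by rewrite /EE /Pf.
Qed.

Lemma drift (P : pop n lam) : avoids lev m P ->
  \big[Rplus/0]_(Q : pop n lam) (ker P Q * gA Q) <= gg P - 1.
Proof.
move=> hP; case: (lvl_range hP) => hl1 hlm.
have hl : (1 <= lvl P <= m)%N by rewrite hl1 hlm.
apply: leR_trans (_ : _ <= \big[Rplus/0]_(Q : pop n lam) (ker P Q * (Psi P Q + Gmax * fI P Q))) _.
  apply: sumR_le => Q _; apply: Rmult_le_compat_l; first exact: ker_ge0.
  exact: gA_bound.
rewrite sum_Psi.
have hPf : Gmax * Pf P <= 1.
  apply: leR_trans HGbud; apply: Rmult_le_compat_l; first exact: Gmax_ge0.
  exact: Pf_bound.
case: psi_b => [[hs1 hs2] hsd].
have hp0 := pB_ge0 (lvl P).+1 P; have hp1 := pB_le1 (lvl P).+1 P.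
have hC := C1_pos.
case: (posnP (Yc P)) => hY.
-
  have hE : EE P psi <= 1 - piJ (lvl P).
    have -> : 1 - piJ (lvl P) = (1 - u0 * zz (lvl P)) ^ lam by rewrite /piJ (Rmult_comm (zz _)); ring.
    rewrite /EE -/u0; apply: Epow_mono; last done.
    + have := u0_b; have := u0_pos; lra.
    + split; first by have := zz_b hl; lra.
      by have := pG1 hP.
  have hWE : W (lvl P) * EE P psi <= W (lvl P) - 2.
    have := W_piJ hl; have := W_ge0 hl => h1 h2.
    have := Rmult_le_compat_l _ _ _ h1 hE; lra.
  have hS : C1 * \big[Rplus/0]_(r < RR.+1) EE P (kap r) <= H0.
    rewrite /H0; apply: Rmult_le_compat_l; first lra.
    have -> : INR RR.+1 = \big[Rplus/0]_(r < RR.+1) 1.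
      by rewrite sumR_const card_ord Rmult_1_r.
    apply: sumR_le => r _; apply: E_le1; [exact: kap_ge0| lra].
  have -> : gg P = FF (lvl P) + W (lvl P) + H0.
    by rewrite /gg hY /= Rmult_0_r exp_0 Rmult_1_r hh0.
  lra.
-
  have hE : W (lvl P) * EE P psi <= W (lvl P) * exp (- psi * INR (Yc P)).
    apply: Rmult_le_compat_l; first exact: W_ge0.
    apply: leR_trans (expY hP hY _) _; first lra.
    apply: exp_le_mono; have h1 := rho_ge1; have h2 := pos_INR (Yc P).
    have h3 : 0 <= (rho - 1) * psi * INR (Yc P).
      by apply: Rmult_le_pos => //; apply: Rmult_le_pos; lra.
    have e : - (rho * psi) * INR (Yc P) = - psi * INR (Yc P) - (rho - 1) * psi * INR (Yc P) by ring.
    lra.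
  have hS : C1 * \big[Rplus/0]_(r < RR.+1) EE P (kap r) <=
            C1 * \big[Rplus/0]_(r < RR.+1) exp (- (rho * kap r) * INR (Yc P)).
    apply: Rmult_le_compat_l; first lra.
    apply: sumR_le => r _; apply: expY => //; split; first exact: kap_ge0.
    rewrite /kap; apply: (Rmult_le_reg_r (rho ^ r)); first by apply: pow_lt; exact: rho_pos.
    rewrite /Rdiv Rmult_assoc Rinv_l; last by apply: pow_nonzero; have := rho_pos; lra.
    have : 1 <= rho ^ r by apply: pow_R1_Rle; exact: rho_ge1.
    nra.
  have key : 2 <= hh (Yc P) - C1 * \big[Rplus/0]_(r < RR.+1) exp (- (rho * kap r) * INR (Yc P)).
    rewrite /hh -Rmult_minus_distr_l -sumR_minus telescope.
    set Yr := INR (Yc P).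
    have hY1 : 1 <= Yr by have := leINR hY.
    have hYlt : Yr < gamma0 * INR lam.
      apply: cnt_real_lt; apply: Yc_lt hP; by [exact: Hlev| exact: k0_le| exact: k0_ge1].
    have hrR : 1 <= rho ^ RR by apply: pow_R1_Rle; exact: rho_ge1.
    have hrR0 : 0 < rho ^ RR by lra.
    set A := kap RR * Yr.
    have hA1 : A <= 1 / 2.
      rewrite /A /kap.
      have -> : psi / rho ^ RR * Yr = (psi * Yr) / rho ^ RR by field; lra.
      apply: (Rmult_le_reg_r (rho ^ RR)) => //.
      rewrite /Rdiv Rmult_assoc Rinv_l; last lra.
      have : psi * Yr <= psi * (gamma0 * INR lam) by apply: Rmult_le_compat_l; lra.
      lra.
    have hA2 : A <= psi * Yr.
      rewrite /A /kap.
      have -> : psi / rho ^ RR * Yr = (psi * Yr) / rho ^ RR by field; lra.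
      apply: (Rmult_le_reg_r (rho ^ RR)) => //.
      rewrite /Rdiv Rmult_assoc Rinv_l; last lra.
      have : 0 <= psi * Yr by apply: Rmult_le_pos; lra.
      nra.
    have hA0 : 0 <= A by apply: Rmult_le_pos; [exact: kap_ge0| lra].
    have heA : 1 / 2 <= exp (- A) by have := exp_ge_1x (- A); lra.
    set x := (rho - 1) * psi.
    have hx : x = psi ^ 2 / (1 + psi) by rewrite /x /rho; field; lra.
    have hx0 : 0 <= x by rewrite hx; apply: Rmult_le_pos; [nra| apply: Rlt_le; apply: Rinv_0_lt_compat; lra].
    have hsplit : exp (- (rho * psi) * Yr) = exp (- A) * exp (- (rho * psi * Yr - A)).
      by rewrite -exp_plus; f_equal; ring.
    have he2 : exp (- (rho * psi * Yr - A)) <= / (1 + x).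
      apply: leR_trans (exp_neg_le hx0).
      apply: exp_le_mono.
      have : x <= (rho - 1) * psi * Yr.
        rewrite /x; have := rho_ge1 => h.
        have : 0 <= (rho - 1) * psi by apply: Rmult_le_pos; lra.
        nra.
      lra.
    rewrite hsplit.
    have hfin : 2 <= C1 * (1 / 2 * (1 - / (1 + x))).
      have -> : C1 * (1 / 2 * (1 - / (1 + x))) = 7 / (2 * (1 + psi + psi ^ 2)).
        by rewrite hx /C1; field; repeat split; nra.
      apply: (Rmult_le_reg_r (2 * (1 + psi + psi ^ 2))); first nra.
      rewrite /Rdiv Rmult_assoc Rinv_l; nra.
    have h1 : 0 <= 1 - / (1 + x).
      have : / (1 + x) <= 1 by rewrite -Rinv_1; apply: Rinv_le_contravar; lra.
      lra.
    have h2 : 1 / 2 * (1 - / (1 + x)) <= exp (- A) * (1 - exp (- (rho * psi * Yr - A))).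
      apply: Rmult_le_compat; lra.
    have h3 : C1 * (1 / 2 * (1 - / (1 + x))) <=
              C1 * (exp (- A) * (1 - exp (- (rho * psi * Yr - A)))).
      by apply: Rmult_le_compat_l; lra.
    have e4 : exp (- A) - exp (- A) * exp (- (rho * psi * Yr - A)) =
              exp (- A) * (1 - exp (- (rho * psi * Yr - A))) by ring.
    have eA : - kap RR * Yr = - A by rewrite /A; ring.
    rewrite eA e4; lra.
  rewrite /gg; lra.
Qed.



Variable init : pop n lam -> R.
Hypothesis Hinit : is_distr init.

Local Notation qq := (q Sel Cross Mut init lev m).
Local Notation survv := (surv Sel Cross Mut init lev m).

Lemma q_nonavoid t (Q : pop n lam) : ~~ avoids lev m Q -> qq t Q = 0.
Proof. by case: t => [|t] /= /negbTE ->. Qed.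

Lemma q_ge0 t (Q : pop n lam) : 0 <= qq t Q.
Proof.
elim: t Q => [|t IH] Q /=; case: ifP => _; try lra.
- by case: Hinit.
- apply: sumR_ge0 => P _; apply: Rmult_le_pos => //; exact: ker_ge0.
Qed.

Definition Phi t := \big[Rplus/0]_(Q : pop n lam) (qq t Q * gg Q).

Lemma Phi_ge0 t : 0 <= Phi t.
Proof.
apply: sumR_ge0 => Q _; case hQ: (avoids lev m Q).
- by apply: Rmult_le_pos; [exact: q_ge0| case: (gg_b hQ)].
- by rewrite q_nonavoid ?hQ //; lra.
Qed.

Lemma Phi_step t : Phi t.+1 <= Phi t - survv t.
Proof.
rewrite /Phi /surv.
have -> : \big[Rplus/0]_(Q : pop n lam) (qq t.+1 Q * gg Q) =
  \big[Rplus/0]_(Q : pop n lam) \big[Rplus/0]_(P : pop n lam) (qq t P * (ker P Q * gA Q)).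
  apply: eq_bigr => Q _ /=; rewrite /gA; case: ifP => hQ.
  - rewrite big_distrl /=; apply: eq_bigr => P _; ring.
  - by rewrite Rmult_0_l big1 // => P _; ring.
rewrite exchange_big /=.
rewrite -sumR_minus; apply: sumR_le => P _.
rewrite sumR_scal.
case hP: (avoids lev m P).
- have := drift hP; have := q_ge0 t P => h1 h2.
  have := Rmult_le_compat_l _ _ _ h1 h2; rewrite Rmult_minus_distr_l Rmult_1_r => h; exact: h.
- by rewrite q_nonavoid ?hP //; lra.
Qed.

Lemma Phi0_le : Phi 0 <= Gmax.
Proof.
rewrite /Phi /=; case: Hinit => h0 h1.
apply: leR_trans (_ : _ <= \big[Rplus/0]_(Q : pop n lam) (init Q * Gmax)) _.
  apply: sumR_le => Q _; case: ifP => hQ.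
  - by apply: Rmult_le_compat_l => //; apply: gg_Gmax.
  - have := h0 Q; have := Gmax_ge0; nra.
rewrite -big_distrl /= h1; lra.
Qed.

Lemma sum_surv N : \big[Rplus/0]_(0 <= t < N) survv t <= Gmax.
Proof.
suff : \big[Rplus/0]_(0 <= t < N) survv t <= Phi 0 - Phi N.
  have := Phi_ge0 N; have := Phi0_le; lra.
elim: N => [|N IH]; first by rewrite big_geq //; lra.
rewrite big_nat_recr //=; have := Phi_step N; lra.
Qed.



Hypothesis HR2 : INR RR <= 1 + 2 / psi * Rmax 0 (ln (2 * psi * gamma0 * INR lam)).
Hypothesis HC5 : INR lam >= 2 / aa * ln (32 * INR m * p0 /
    ((delta * gamma0) ^ 2 * (psi ^ 4 / 24) * s_star * psi)).

Definition LL := ln (1 + psi ^ 4 / 24 * INR lam).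

Lemma LL_b : 0 <= LL <= psi ^ 4 / 24 * INR lam.
Proof.
case: psi_b => [[h1 h2] _]; have hl := lamR.
have hc : 0 <= psi ^ 4 / 24 * INR lam.
  apply: Rmult_le_pos; last lra; apply: Rmult_le_pos; [apply: pow_le; lra| lra].
split; last exact: ln_1x.
rewrite -ln_1; apply: ln_le; lra.
Qed.

Lemma W_bound j : (1 <= j <= m)%N ->
  INR lam * W j <= 2 * INR lam + 3 / psi * (p0 / ((1 + delta) * gamma0 * s j)).
Proof.
move=> hj; have hz := zz_b hj; have hu := u0_b; have hu0 := u0_pos.
case: psi_b => [[h1 h2] _]; have hl := lamR.
set X := INR lam * (zz j * u0).
have hX : 0 < X by rewrite /X; apply: Rmult_lt_0_compat; [lra| nra].
have hpi : X / (1 + X) <= piJ j.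
  rewrite /piJ.
  have h := one_minus_pow lam (x := zz j * u0) ltac:(split; nra).
  rewrite -/X in h.
  have -> : X / (1 + X) = 1 - / (1 + X) by field; lra.
  lra.
have hpi0 : 0 < X / (1 + X) by apply: Rdiv_lt_0_compat; lra.
have hW : W j <= 2 + 2 / X.
  rewrite /W; have -> : 2 + 2 / X = 2 / (X / (1 + X)) by field; lra.
  apply: Rmult_le_compat_l; first lra.
  by apply: Rinv_le_contravar.
have e1 : INR lam * (2 + 2 / X) = 2 * INR lam + 2 / u0 * (/ zz j).
  rewrite /X; field; repeat split; lra.
have e2 : / zz j = p0 / ((1 + delta) * gamma0 * s j).
  have [hs1 hs2] := Hs hj.
  rewrite /zz; field; repeat split; lra.
have h3 : 2 / u0 <= 3 / psi.
  have hu' : psi / (1 + psi) <= u0 by case: hu.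
  have : 2 / u0 <= 2 / (psi / (1 + psi)).
    apply: Rmult_le_compat_l; first lra.
    apply: Rinv_le_contravar => //; apply: Rdiv_lt_0_compat; lra.
  have -> : 2 / (psi / (1 + psi)) = 2 * (1 + psi) / psi by field; lra.
  have : 2 * (1 + psi) / psi <= 3 / psi.
    apply: Rmult_le_compat_r; first by apply: Rlt_le; apply: Rinv_0_lt_compat.
    lra.
  lra.
have hzi : 0 <= / zz j by apply: Rlt_le; apply: Rinv_0_lt_compat; lra.
have := Rmult_le_compat_l _ _ _ (pos_INR lam) hW.
rewrite e1 -e2 => h.
have := Rmult_le_compat_r _ _ _ hzi h3.
lra.
Qed.

Lemma H0_bound : H0 <= 7 / psi ^ 2 * (2 + 2 / psi * (LL + 6 / psi)).
Proof.
case: psi_b => [[h1 h2] _]; have hl := lamR.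
have [hL0 hL1] := LL_b.
rewrite /H0 /C1 S_INR; apply: Rmult_le_compat_l.
  by apply: Rmult_le_pos; [lra| apply: Rlt_le; apply: Rinv_0_lt_compat; apply: pow_lt].
have hmax : Rmax 0 (ln (2 * psi * gamma0 * INR lam)) <= LL + 6 / psi.
  have h6 : 0 <= 6 / psi by apply: Rmult_le_pos; [lra| apply: Rlt_le; apply: Rinv_0_lt_compat].
  apply: Rmax_lub; first lra.
  have hx : 0 < 2 * psi * gamma0 * INR lam.
    apply: Rmult_lt_0_compat; last lra; apply: Rmult_lt_0_compat; lra.
  have h48 : 0 < 48 / psi ^ 3 by apply: Rdiv_lt_0_compat; [lra| apply: pow_lt].
  have hc : 0 <= psi ^ 4 / 24 * INR lam.
    apply: Rmult_le_pos; last lra; apply: Rmult_le_pos; [apply: pow_le; lra| lra].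
  have hle : 2 * psi * gamma0 * INR lam <= 48 / psi ^ 3 * (1 + psi ^ 4 / 24 * INR lam).
    have -> : 48 / psi ^ 3 * (1 + psi ^ 4 / 24 * INR lam) = 48 / psi ^ 3 + 2 * psi * INR lam.
      by field; lra.
    have : 2 * psi * gamma0 * INR lam <= 2 * psi * INR lam.
      have : 0 <= 2 * psi * INR lam by nra.
      nra.
    lra.
  apply: leR_trans (ln_le _ _ hx hle) _.
  rewrite ln_mult //; last lra.
  rewrite /LL.
  have : ln (48 / psi ^ 3) <= 6 / psi.
    have h4 : 0 < 4 / psi by apply: Rdiv_lt_0_compat; lra.
    have : 48 / psi ^ 3 <= (4 / psi) ^ 3.
      have -> : (4 / psi) ^ 3 = 64 / psi ^ 3 by field; lra.
      apply: Rmult_le_compat_r; last lra.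
      by apply: Rlt_le; apply: Rinv_0_lt_compat; apply: pow_lt.
    move=> h; apply: leR_trans (ln_le _ _ h48 h) _.
    rewrite ln_pow //; have := ln_half h4.
    have -> : 6 / psi = INR 3 * (4 / psi / 2) by rewrite /=; field; lra.
    move=> h'; apply: Rmult_le_compat_l; first by rewrite /=; lra.
    exact: h'.
  lra.
have := Rmult_le_compat_l (2 / psi) _ _ ltac:(apply: Rmult_le_pos; [lra| apply: Rlt_le; apply: Rinv_0_lt_compat; lra]) hmax.
lra.
Qed.

Lemma lam_Gmax : INR lam * Gmax <=
  48 / psi ^ 5 * (INR m * INR lam * (1 + LL) +
     p0 / ((1 + delta) * gamma0) * \big[Rplus/0]_(1 <= j < m.+1) (/ s j)).
Proof.
case: psi_b => [[h1 h2] _]; have hl := lamR.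
have [hL0 hL1] := LL_b.
rewrite /Gmax /FF big_distrr.
have -> : INR m * INR lam * (1 + LL) = \big[Rplus/0]_(1 <= j < m.+1) (INR lam * (1 + LL)).
  rewrite big_const_nat iter_plus subSS subn0; ring.
rewrite -(sumR_scal _ _ (fun j => / s j)) -big_split -sumR_scal.
rewrite big_nat_cond [X in _ <= X]big_nat_cond.
apply: sumR_le => j /andP[/andP[hj1 hj2] _].
have hj : (1 <= j <= m)%N by rewrite hj1 -ltnS hj2.
have [hs1 hs2] := Hs hj.
set zi := p0 / ((1 + delta) * gamma0 * s j).
have hzi : 0 <= zi.
  rewrite /zi; apply: Rmult_le_pos; first lra.
  apply: Rlt_le; apply: Rinv_0_lt_compat; apply: Rmult_lt_0_compat; last lra.
  apply: Rmult_lt_0_compat; lra.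
have -> : p0 / ((1 + delta) * gamma0) * / s j = zi by rewrite /zi; field; repeat split; lra.
have hW := W_bound hj; rewrite -/zi in hW.
have hH := H0_bound.
have hb := budget_level (conj h1 h2) hl hL0 hzi.
have : INR lam * H0 <= INR lam * (7 / psi ^ 2 * (2 + 2 / psi * (LL + 6 / psi))).
  by apply: Rmult_le_compat_l; [exact: pos_INR| exact: hH].
move=> h; change (INR lam * (W j + H0) <= 48 / psi ^ 5 * (INR lam * (1 + LL) + zi)).
have : INR lam * (2 + 7 / psi ^ 2 * (2 + 2 / psi * (LL + 6 / psi))) =
  2 * INR lam + INR lam * (7 / psi ^ 2 * (2 + 2 / psi * (LL + 6 / psi))) by ring.
lra.
Qed.



Lemma HGbud_proof : Gmax * exp (- aa * INR lam) <= 1.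
Proof.
case: psi_b => [[h1 h2] _]; have hl := lamR.
have [hL0 hL1] := LL_b.
have he := exp_pos (- aa * INR lam).
case: (posnP m) => hm.
  rewrite /Gmax /FF hm big_geq //; lra.
set zis := p0 / ((1 + delta) * gamma0 * s_star).
set B := 2 + 14 / psi ^ 2 + 84 / psi ^ 4 + 14 / psi ^ 3 * LL + 3 / psi * zis / INR lam.
have hG : Gmax <= INR m * B.
  rewrite /Gmax /FF.
  have -> : INR m * B = \big[Rplus/0]_(1 <= j < m.+1) B.
    by rewrite big_const_nat iter_plus subSS subn0.
  rewrite big_nat_cond [X in _ <= X]big_nat_cond.
  apply: sumR_le => j /andP[/andP[hj1 hj2] _].
  have hj : (1 <= j <= m)%N by rewrite hj1 -ltnS hj2.
  have [hs1 hs2] := Hs hj.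
  have hss := Rge_le _ _ (proj2 (HC1 hj)).
  have hW := W_bound hj.
  have hH := H0_bound.
  have hzz : p0 / ((1 + delta) * gamma0 * s j) <= zis.
    rewrite /zis; apply: Rmult_le_compat_l; first lra.
    apply: Rinv_le_contravar; first by apply: Rmult_lt_0_compat; [nra| lra].
    apply: Rmult_le_compat_l; nra.
  have hW' : W j <= 2 + 3 / psi * zis / INR lam.
    apply: (Rmult_le_reg_l (INR lam)); first lra.
    have -> : INR lam * (2 + 3 / psi * zis / INR lam) = 2 * INR lam + 3 / psi * zis by field; lra.
    have : 3 / psi * (p0 / ((1 + delta) * gamma0 * s j)) <= 3 / psi * zis.
      by apply: Rmult_le_compat_l; [apply: Rmult_le_pos; [lra| apply: Rlt_le; apply: Rinv_0_lt_compat]|].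
    lra.
  have e : 7 / psi ^ 2 * (2 + 2 / psi * (LL + 6 / psi)) = 14 / psi ^ 2 + 84 / psi ^ 4 + 14 / psi ^ 3 * LL.
    by field; lra.
  rewrite /B; lra.
have hm1 : 1 <= INR m by have := leINR hm.
have hgp : gamma0 * (1 + delta) <= p0 by nra.
have haa : 0 < aa.
  rewrite /aa; apply: Rdiv_lt_0_compat; last lra.
  apply: Rmult_lt_0_compat; [by apply: pow_lt| lra].
have hC5' : ln (32 * INR m * p0 / ((delta * gamma0) ^ 2 * (psi ^ 4 / 24) * s_star * psi))
              <= aa * INR lam / 2.
  have h := Rge_le _ _ HC5.
  apply: (Rmult_le_reg_l (2 / aa)); first by apply: Rdiv_lt_0_compat; lra.
  have -> : 2 / aa * (aa * INR lam / 2) = INR lam by field; lra.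
  exact: h.
have := budget_fall (conj h1 h2) Hdelta (proj1 Hg0) hgp (proj2 Hp0) Hss hl hm1 hL0 hL1 hC5'.
rewrite -/aa -/zis -/B => hb.
have : Gmax * exp (- aa * INR lam) <= INR m * B * exp (- aa * INR lam).
  by apply: Rmult_le_compat_r; lra.
move=> h; apply: leR_trans h _.
exact: hb.
Qed.

End Main.

Lemma ceil_ex (x : R) : 0 < x -> exists k : nat, INR k - 1 < x <= INR k.
Proof.
move=> hx.
have [N [hN1 hN2]] := archimed_cor1 (/ x) (Rinv_0_lt_compat _ hx).
have hN : x <= INR N.
  have hN0 : 0 < INR N by apply: lt_0_INR.
  have : / / x < / / INR N by apply: Rinv_lt_contravar => //; apply: Rmult_lt_0_compat;
    apply: Rinv_0_lt_compat.
  rewrite !Rinv_inv; lra.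
elim: N hN {hN1 hN2} => [|N IH] hN; first by rewrite /= in hN; lra.
case: (Rle_lt_dec x (INR N)) => h; first exact: IH.
by exists N.+1; rewrite S_INR in hN *; lra.
Qed.

Lemma RR_ex (delta gamma0 : R) (lam : nat) : 0 < delta -> 0 < gamma0 -> (0 < lam)%N ->
  exists RR : nat, 2 * psi delta * gamma0 * INR lam <= rho delta ^ RR /\
     INR RR <= 1 + 2 / psi delta * Rmax 0 (ln (2 * psi delta * gamma0 * INR lam)).
Proof.
move=> hd hg hl.
have [[hp1 hp2] _] := psi_b hd.
have hl1 : 1 <= INR lam by have := leINR hl.
set x := 2 * psi delta * gamma0 * INR lam.
have hx : 0 < x by rewrite /x; apply: Rmult_lt_0_compat; [apply: Rmult_lt_0_compat|]; lra.
have h2p : 0 <= 2 / psi delta by apply: Rmult_le_pos; [lra| apply: Rlt_le; apply: Rinv_0_lt_compat].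
have hmax : 0 <= Rmax 0 (ln x) by apply: Rmax_l.
case: (Rle_lt_dec x 1) => hx1.
  exists 0%N; rewrite /=; split; first lra.
  have := Rmult_le_pos _ _ h2p hmax; lra.
set r := rho delta.
have hr : 1 < r.
  rewrite /r /rho; apply: (Rmult_lt_reg_r (1 + psi delta)); first lra.
  rewrite /Rdiv Rmult_assoc Rinv_l; lra.
have hlr : 0 < ln r by rewrite -ln_1; apply: ln_increasing; lra.
have hlnx : 0 < ln x by rewrite -ln_1; apply: ln_increasing; lra.
have [k [hk1 hk2]] := ceil_ex (Rdiv_lt_0_compat _ _ hlnx hlr).
exists k; split.
- have -> : r ^ k = exp (ln r * INR k) by rewrite exp_INR_mul exp_ln //; lra.
  rewrite -[X in X <= _](exp_ln x) //; apply: exp_le_mono.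
  have := Rmult_le_compat_l _ _ _ (Rlt_le _ _ hlr) hk2.
  have -> : ln r * (ln x / ln r) = ln x by field; lra.
  lra.
- rewrite Rmax_right; last lra.
  have hlr2 : psi delta / 2 <= ln r.
    have h := exp_ge_1x (- ln r).
    rewrite exp_Ropp exp_ln in h; last lra.
    have e : / r = (1 + psi delta) / (1 + 2 * psi delta) by rewrite /r /rho; field; lra.
    rewrite e in h.
    have : psi delta / 2 <= 1 - (1 + psi delta) / (1 + 2 * psi delta).
      have -> : 1 - (1 + psi delta) / (1 + 2 * psi delta) = psi delta / (1 + 2 * psi delta) by field; lra.
      apply: Rmult_le_compat_l; first lra.
      apply: Rinv_le_contravar; lra.
    lra.
  have : ln x / ln r <= 2 / psi delta * ln x.
    have -> : ln x / ln r = ln x * / ln r by [].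
    have -> : 2 / psi delta * ln x = ln x * / (psi delta / 2) by field; lra.
    apply: Rmult_le_compat_l; first lra.
    apply: Rinv_le_contravar => //; lra.
  lra.
Qed.

Unset Implicit Arguments.

Theorem corollary1
  (n lam m : nat)
  (Sel : pop n lam -> 'I_lam -> R)
  (Cross : bits n -> bits n -> bits n -> R)
  (Mut : bits n -> bits n -> R)
  (init : pop n lam -> R)
  (lev : bits n -> nat)
  (s : nat -> R) (s_star p0 eps delta gamma0 : R) :
  (0 < lam)%N ->
  (forall P, is_distr (Sel P)) ->
  (forall u v, is_distr (Cross u v)) ->
  (forall x, is_distr (Mut x)) ->
  is_distr init ->
  (forall x, (1 <= lev x <= m.+1)%N) ->
  (forall j, (1 <= j <= m)%N -> 0 < s j <= 1) ->
  0 < s_star <= 1 -> 0 < p0 <= 1 -> 0 < eps <= 1 -> 0 < delta ->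
  0 < gamma0 < 1 ->
  (forall j, (1 <= j <= m)%N ->
     (forall x, (j <= lev x)%N ->
        \big[Rplus/0]_(y : bits n | (j.+1 <= lev y)%N) Mut x y >= s j)
     /\ s j >= s_star) ->
  (forall x, Mut x x >= p0) ->
  (forall j, (1 <= j <= m - 1)%N -> forall u v,
     (j <= lev u)%N -> (j.+1 <= lev v)%N ->
     \big[Rplus/0]_(x : bits n | (j.+1 <= lev x)%N) Cross u v x >= eps) ->
  (forall gamma, 0 < gamma < gamma0 ->
     forall k : nat, INR k - 1 < gamma * INR lam <= INR k ->
     forall P : pop n lam, avoids lev m P ->
       beta_k Sel lev k P >= gamma * sqrt ((1 + delta) / (p0 * eps * gamma0))) ->
  (let a := delta ^ 2 * gamma0 / (2 * (1 + delta)) in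
   let psi := Rmin (delta / 2) (1 / 2) in
   let c := psi ^ 4 / 24 in
   INR lam >= 2 / a * ln (32 * INR m * p0 / ((delta * gamma0) ^ 2 * c * s_star * psi))) ->
  let psi := Rmin (delta / 2) (1 / 2) in
  let c := psi ^ 4 / 24 in
  forall N : nat,
    ET_partial Sel Cross Mut init lev m N <=
    2 / (c * psi) *
      (INR m * INR lam * (1 + ln (1 + c * INR lam)) +
       p0 / ((1 + delta) * gamma0) * \big[Rplus/0]_(1 <= j < m.+1) (/ s j)).
Proof.
move=> Hlam HSel HCross HMut Hinit Hlev Hs Hss Hp0 Heps Hdelta Hg0 HC1 HC2 HC3 HC4 HC5 ps c N.
have eps_ : ps = psi delta by [].
have ec : c = psi delta ^ 4 / 24 by [].
rewrite ec eps_.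
have [[hp1 hp2] _] := psi_b Hdelta.
have hl1 : 1 <= INR lam by have := leINR Hlam.
have hcp : 2 / (psi delta ^ 4 / 24 * psi delta) = 48 / psi delta ^ 5 by field; lra.
rewrite hcp.
have hRHS : 0 <= 48 / psi delta ^ 5 *
      (INR m * INR lam * (1 + ln (1 + psi delta ^ 4 / 24 * INR lam)) +
       p0 / ((1 + delta) * gamma0) * \big[Rplus/0]_(1 <= j < m.+1) (/ s j)).
  apply: Rmult_le_pos.
    by apply: Rmult_le_pos; [lra| apply: Rlt_le; apply: Rinv_0_lt_compat; apply: pow_lt].
  apply: Rplus_le_le_0_compat.
  - apply: Rmult_le_pos; first by apply: Rmult_le_pos; apply: pos_INR.
    have : 0 <= ln (1 + psi delta ^ 4 / 24 * INR lam).
      rewrite -ln_1; apply: ln_le; first lra.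
      have : 0 <= psi delta ^ 4 / 24 * INR lam.
        by apply: Rmult_le_pos; [apply: Rmult_le_pos; [apply: pow_le; lra| lra]| lra].
      lra.
    lra.
  - apply: Rmult_le_pos.
      apply: Rmult_le_pos; first lra.
      by apply: Rlt_le; apply: Rinv_0_lt_compat; apply: Rmult_lt_0_compat; lra.
    rewrite big_nat_cond; apply: sumR_ge0 => j /andP[/andP[hj1 hj2] _].
    have hj : (1 <= j <= m)%N by rewrite hj1 -ltnS hj2.
    by have [h _] := Hs j hj; apply: Rlt_le; apply: Rinv_0_lt_compat.
case: (boolP [exists P : pop n lam, avoids lev m P]) => hex; last first.
  rewrite /ET_partial big1 ?Rmult_0_r // => t _.
  rewrite /surv big1 // => Q _.
  apply: q_nonavoid.
  by move/existsPn: hex.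
case/existsP: hex => P0 hP0.
have hg0l : 0 < gamma0 * INR lam by apply: Rmult_lt_0_compat; lra.
have [k0 Hk0] := ceil_ex hg0l.
have Hg0p : gamma0 * (1 + delta) <= p0 * eps.
  have hb := beta_k0 Hlam Hp0 Heps Hdelta Hg0 HC4 Hk0 hP0.
  have hb1 : beta_k Sel lev k0 P0 <= 1 by apply: beta_le1.
  have hK : 0 <= KK p0 eps delta gamma0 by apply: KK_ge0.
  have hK2 : KK p0 eps delta gamma0 * KK p0 eps delta gamma0 = (1 + delta) / (p0 * eps * gamma0) by apply: KK2.
  have h1 : gamma0 * KK p0 eps delta gamma0 <= 1 by lra.
  have h0 : 0 <= gamma0 * KK p0 eps delta gamma0 by apply: Rmult_le_pos; lra.
  have h2 : (gamma0 * KK p0 eps delta gamma0) * (gamma0 * KK p0 eps delta gamma0) <= 1 by nra.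
  have e : (gamma0 * KK p0 eps delta gamma0) * (gamma0 * KK p0 eps delta gamma0) =
           gamma0 * (1 + delta) / (p0 * eps).
    have -> : (gamma0 * KK p0 eps delta gamma0) * (gamma0 * KK p0 eps delta gamma0) =
              gamma0 * gamma0 * (KK p0 eps delta gamma0 * KK p0 eps delta gamma0) by ring.
    rewrite hK2; field; repeat split; lra.
  rewrite e in h2.
  have hpe : 0 < p0 * eps by apply: Rmult_lt_0_compat; lra.
  apply: (Rmult_le_reg_r (/ (p0 * eps))); first by apply: Rinv_0_lt_compat.
  rewrite Rinv_r; lra.
have [RR [HR1 HR2]] := RR_ex Hdelta (proj1 Hg0) Hlam.
have HC5' : INR lam >= 2 / aa delta gamma0 * ln (32 * INR m * p0 /
    ((delta * gamma0) ^ 2 * (psi delta ^ 4 / 24) * s_star * psi delta)) by exact: HC5.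
have HGb := HGbud_proof Hlam Hs Hss Hp0 Heps Hdelta Hg0 HC1 Hg0p HR2 HC5'.
have hsum := sum_surv Hlam HSel HCross HMut Hlev Hs Hss Hp0 Heps Hdelta Hg0 HC1 HC2 HC3 HC4
  Hk0 Hg0p HR1 HGb Hinit N.
have hG := lam_Gmax Hlam Hs Hss Hp0 Heps Hdelta Hg0 Hg0p HR2.
rewrite /ET_partial.
apply: leR_trans (Rmult_le_compat_l _ _ _ (pos_INR lam) hsum) _.
exact: hG.
Qed.
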